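(* Suppose $(C,\mathbf A)$ (state space $\mathcal X$) and $(\widetilde C,\widetilde{\mathbf A})$ (state space $\widetilde{\mathcal X}$), with common output space $\mathcal Y$, are two observable output-stable pairs with both $\mathbf A$ and $\widetilde{\mathbf A}$ commutative, such that $K^{\mathbf a}_{C,\mathbf A}(\boldsymbol\lambda,\boldsymbol\zeta)=K^{\mathbf a}_{\widetilde C,\widetilde{\mathbf A}}(\boldsymbol\lambda,\boldsymbol\zeta)$ for all $\boldsymbol\lambda,\boldsymbol\zeta\in\mathbb B^d$. Then there is a unitary $U\colon\mathcal X\to\widetilde{\mathcal X}$ with $C=\widetilde CU$ and $A_j=U^{-1}\widetilde A_jU$ for $j=1,\dots,d$.
   Context: $\mathbb B^d$: open unit ball of $\mathbb C^d$. $\mathcal F_d$: free semigroup of words on $\{1,\dots,d\}$, $\mathbf A^v=A_{i_N}\cdots A_{i_1}$ for $v=i_N\cdots i_1$. $(C,\mathbf A)$ is output-stable if $x\mapsto\{C\mathbf A^vx\}_{v\in\mathcal F_d}$ is bounded from $\mathcal X$ into $\ell^2_{\mathcal Y}(\mathcal F_d)$, and observable if $C\mathbf A^vx=0$ for all $v$ implies $x=0$. For commutative $\mathbf A$ and $\mathbf n\in\mathbb Z^d_+$, $\mathbf A^{\mathbf n}=A_1^{n_1}\cdots A_d^{n_d}$, $|\mathbf n|=\sum n_k$, $\mathbf n!=\prod n_k!$, $\boldsymbol\lambda^{\mathbf n}=\prod\lambda_k^{n_k}$. For $\boldsymbol\lambda\in\mathbb B^d$ let $E(\boldsymbol\lambda)\colon\mathcal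 X\to\mathcal Y$, $E(\boldsymbol\lambda)x=\sum_{\mathbf n}\frac{|\mathbf n|!}{\mathbf n!}C\mathbf A^{\mathbf n}x\,\boldsymbol\lambda^{\mathbf n}$ (i.e. $C(I-\sum_j\lambda_jA_j)^{-1}x$), and $K^{\mathbf a}_{C,\mathbf A}(\boldsymbol\lambda,\boldsymbol\zeta)=E(\boldsymbol\lambda)E(\boldsymbol\zeta)^*=C(I-\sum_j\lambda_jA_j)^{-1}(I-\sum_j\overline{\zeta_j}A_j^* )^{-1}C^*$; similarly for $(\widetilde C,\widetilde{\mathbf A})$. *)

(* Defs.v *)
From HB Require Import structures.
From mathcomp Require Import all_boot all_order all_algebra.
From mathcomp Require Export complex reals.
Set Implicit Arguments. Unset Strict Implicit. Unset Printing Implicit Defensive.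
Import Order.TTheory GRing.Theory Num.Theory.
Local Open Scope ring_scope.

Section Hilbert.
Variable R : realType.
Local Notation C := R[i].

Record hilbert (V : lmodType C) := Hilbert {
  inner : V -> V -> C;
  inner_linear : forall (a : C) (x1 x2 y : V),
    inner (a *: x1 + x2) y = a * inner x1 y + inner x2 y;
  inner_conj : forall x y : V, inner y x = ((inner x y)^*)%C;
  inner_ge0 : forall x : V, 0 <= inner x x;
  inner_eq0 : forall x : V, inner x x = 0 -> x = 0;
  inner_complete : forall u : nat -> V,
    (forall e : R, 0 < e -> exists N, forall m n, (N <= m)%N -> (N <= n)%N ->
        Num.sqrt (complex.Re (inner (u m - u n) (u m - u n))) < e) ->
    exists l : V, forall e : R, 0 < e -> exists N, forall n, (N <= n)%N ->
        Num.sqrt (complex.Re (inner (u n - l) (u n - l))) < e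
}.

Definition hnorm (V : lmodType C) (H : hilbert V) (x : V) : R :=
  Num.sqrt (complex.Re (inner H x x)).

Definition hconverges (V : lmodType C) (H : hilbert V) (u : nat -> V) (l : V) :=
  forall e : R, 0 < e -> exists N, forall n, (N <= n)%N -> hnorm H (u n - l) < e.

Definition is_linear (V W : lmodType C) (T : V -> W) :=
  forall (a : C) (x y : V), T (a *: x + y) = a *: T x + T y.

Definition bounded_op (V W : lmodType C) (HV : hilbert V) (HW : hilbert W) (T : V -> W) :=
  is_linear T /\ exists M : R, forall x, hnorm HW (T x) <= M * hnorm HV x.

Definition is_adjoint (V W : lmodType C) (HV : hilbert V) (HW : hilbert W)
  (T : V -> W) (S : W -> V) :=
  forall x y, inner HW (T x) y = inner HV x (S y).

(* A^v for a word v = i_N ... i_1, represented as the sequence [:: i_N; ...; i_1] *)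
Definition apply_word (d : nat) (V : lmodType C) (A : 'I_d -> V -> V) (v : seq 'I_d) : V -> V :=
  foldr (fun i f => A i \o f) id v.

(* output stability: x |-> (C A^v x)_{v in F_d} is bounded X -> l^2_Y(F_d);
   words of length k are k-tuples over 'I_d *)
Definition output_stable (d : nat) (X Y : lmodType C) (HX : hilbert X) (HY : hilbert Y)
  (Cop : X -> Y) (A : 'I_d -> X -> X) :=
  exists M : R, forall (x : X) (N : nat),
    \sum_(k < N) \sum_(v : k.-tuple 'I_d) hnorm HY (Cop (apply_word A v x)) ^+ 2
      <= M * hnorm HX x ^+ 2.

Definition observable (d : nat) (X Y : lmodType C) (Cop : X -> Y) (A : 'I_d -> X -> X) :=
  forall x : X, (forall v : seq 'I_d, Cop (apply_word A v x) = 0) -> x = 0.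

Definition commutative_tuple (d : nat) (X : lmodType C) (A : 'I_d -> X -> X) :=
  forall i j x, A i (A j x) = A j (A i x).

Definition in_ball (d : nat) (l : 'I_d -> C) := \sum_(j < d) `|l j| ^+ 2 < 1.

Definition apow (d : nat) (X : lmodType C) (A : 'I_d -> X -> X) (n : 'I_d -> nat) (x : X) : X :=
  foldr (fun j z => iter (n j) (A j) z) x (enum 'I_d).

(* homogeneous part of degree k of the series E(lambda) x:
   sum over multi-indices n with |n| = k of |n|!/n! C A^n x lambda^n *)
Definition E_hom (d : nat) (X Y : lmodType C) (Cop : X -> Y) (A : 'I_d -> X -> X)
  (l : 'I_d -> C) (k : nat) (x : X) : Y :=
  \sum_(n : {ffun 'I_d -> 'I_k.+1} | (\sum_(j < d) (n j : nat) == k)%N)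
     ((k`!)%:R / (\prod_(j < d) (n j)`!)%:R * \prod_(j < d) l j ^+ n j)
       *: Cop (apow A (fun j => (n j : nat)) x).

(* E is the map lambda |-> E(lambda): its value at x is the norm limit of
   the partial sums of the series (ordered by total degree) *)
Definition is_E (d : nat) (X Y : lmodType C) (HY : hilbert Y) (Cop : X -> Y)
  (A : 'I_d -> X -> X) (E : ('I_d -> C) -> X -> Y) :=
  forall l, in_ball l -> forall x,
    hconverges HY (fun N => \sum_(k < N) E_hom Cop A l k x) (E l x).

End Hilbert.

(* Main.v *)
From HB Require Import structures.
Require Import Defs.
From mathcomp Require Import all_boot all_order all_algebra complex reals.
From mathcomp Require Import ring lra zify.
From mathcomp Require Import boolp classical_sets.
Import Order.TTheory GRing.Theory Num.Theory.
Local Open Scope ring_scope.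

Module Part1.
Set Implicit Arguments. Unset Strict Implicit. Unset Printing Implicit Defensive.
Local Open Scope ring_scope.
Local Open Scope complex_scope.

Section Scal.
Variable R : realType.
Local Notation C := R[i].
Implicit Types a b c : C.

Definition cn (c : C) : R := Num.sqrt (complex.Re c ^+ 2 + complex.Im c ^+ 2).

Lemma normC_cn (c : C) : `|c| = (cn c)%:C.
Proof. by rewrite normc_def. Qed.

Lemma cn_ge0 c : 0 <= cn c.
Proof. exact: sqrtr_ge0. Qed.

Lemma cnE c : cn c = complex.Re `|c|.
Proof. by rewrite normC_cn. Qed.

Lemma cn_sq c : cn c ^+ 2 = complex.Re c ^+ 2 + complex.Im c ^+ 2.
Proof. by rewrite sqr_sqrtr // addr_ge0 // sqr_ge0. Qed.

Lemma mulcJ c : c * (c^*)%C = (cn c ^+ 2)%:C.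
Proof. by rewrite -sqr_normc normC_cn rmorphXn. Qed.

Lemma mulJc c : (c^*)%C * c = (cn c ^+ 2)%:C.
Proof. by rewrite mulrC mulcJ. Qed.

Lemma cnM a b : cn (a * b) = cn a * cn b.
Proof.
apply: (@complexI R); rewrite rmorphM /= -!normC_cn; exact: normrM.
Qed.

Lemma cnD a b : cn (a + b) <= cn a + cn b.
Proof.
have := ler_normD a b; rewrite !normC_cn -rmorphD /=.
by rewrite lecR.
Qed.

Lemma cnN a : cn (- a) = cn a.
Proof. by case: a => x y; rewrite /cn /= !sqrrN. Qed.

Lemma cnB a b : cn (a - b) = cn (b - a).
Proof. by rewrite -cnN opprB. Qed.

Lemma cn_eq0 a : cn a = 0 -> a = 0.
Proof.
move=> h; apply/normr0_eq0; rewrite normC_cn h //.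
Qed.

Lemma cn0 : cn 0 = 0.
Proof. by rewrite /cn /= expr0n /= addr0 sqrtr0. Qed.

Lemma cnR (r : R) : cn (r%:C) = `|r|.
Proof. by rewrite /cn /= expr0n /= addr0 sqrtr_sqr. Qed.

Lemma cn_nat n : cn (n%:R) = n%:R.
Proof.
have -> : (n%:R : C) = (n%:R : R)%:C by rewrite rmorph_nat.
by rewrite cnR ger0_norm.
Qed.

Lemma Re_le_cn c : complex.Re c <= cn c.
Proof.
rewrite /cn; apply: (le_trans (ler_norm _)); rewrite -sqrtr_sqr ler_sqrt.
  by rewrite lerDl sqr_ge0.
by rewrite addr_ge0 // sqr_ge0.
Qed.

Lemma conjRM (r : R) c : ((r%:C * c)^*)%C = r%:C * (c^*)%C.
Proof. by rewrite (fst (@conjc_is_multiplicative R)) conjc_real. Qed.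

Lemma RCM (r s : R) : r%:C * s%:C = (r * s)%:C.
Proof. by rewrite rmorphM. Qed.

Lemma ReJ c : complex.Re (c^*)%C = complex.Re c.
Proof. by case: c. Qed.

Lemma ImJ c : complex.Im (c^*)%C = - complex.Im c.
Proof. by case: c. Qed.

Lemma cnJ c : cn (c^*)%C = cn c.
Proof. by rewrite /cn ReJ ImJ sqrrN. Qed.

Lemma ReD a b : complex.Re (a + b) = complex.Re a + complex.Re b.
Proof. by case: a; case: b. Qed.

Lemma ReN a : complex.Re (- a) = - complex.Re a.
Proof. by case: a. Qed.

Lemma ReRM (r : R) a : complex.Re (r%:C * a) = r * complex.Re a.
Proof. by case: a => x y /=; rewrite !mul0r subr0. Qed.

Lemma ReR (r : R) : complex.Re (r%:C) = r.
Proof. by []. Qed.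

Lemma ge0_real (z : C) : 0 <= z -> z = (complex.Re z)%:C.
Proof.
case: z => a b; rewrite lecE /= => /andP[/eqP -> _] //.
Qed.

Lemma cn_le_real (z : C) (r : R) : `|z| <= r%:C -> cn z <= r.
Proof. by rewrite normC_cn lecR. Qed.

End Scal.

Section IP.
Variable R : realType.
Local Notation C := R[i].
Implicit Types a b c : C.
Variable V : lmodType C.
Variable H : hilbert V.
Local Notation ip := (inner H).
Local Notation hn := (hnorm H).

Lemma ipDl x y z : ip (x + y) z = ip x z + ip y z.
Proof. by have := inner_linear H 1 x y z; rewrite scale1r mul1r. Qed.

Lemma ip0l z : ip 0 z = 0.
Proof.
have := inner_linear H 1 0 0 z; rewrite scale1r addr0 mul1r => h.
by apply/eqP; rewrite -(addrI _ (esym (etrans (addr0 _) h))).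
Qed.

Lemma ipZl a x z : ip (a *: x) z = a * ip x z.
Proof. by have := inner_linear H a x 0 z; rewrite addr0 ip0l addr0. Qed.

Lemma ipNl x z : ip (- x) z = - ip x z.
Proof. by rewrite -scaleN1r ipZl mulN1r. Qed.

Lemma ipBl x y z : ip (x - y) z = ip x z - ip y z.
Proof. by rewrite ipDl ipNl. Qed.

Lemma ipDr x y z : ip x (y + z) = ip x y + ip x z.
Proof. by rewrite inner_conj ipDl rmorphD /= -!inner_conj. Qed.

Lemma ip0r x : ip x 0 = 0.
Proof. by rewrite inner_conj ip0l conjc0. Qed.

Lemma ipZr a x y : ip x (a *: y) = (a^*)%C * ip x y.
Proof. by rewrite inner_conj ipZl rmorphM /= -inner_conj. Qed.

Lemma ipNr x y : ip x (- y) = - ip x y.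
Proof. by rewrite inner_conj ipNl rmorphN /= -inner_conj. Qed.

Lemma ipBr x y z : ip x (y - z) = ip x y - ip x z.
Proof. by rewrite ipDr ipNr. Qed.

Lemma ip_suml I (r : seq I) (P : pred I) (F : I -> V) z :
  ip (\sum_(i <- r | P i) F i) z = \sum_(i <- r | P i) ip (F i) z.
Proof. exact: (big_morph (fun x => ip x z) (fun x y => ipDl x y z) (ip0l z)). Qed.

Lemma ip_sumr I (r : seq I) (P : pred I) (F : I -> V) z :
  ip z (\sum_(i <- r | P i) F i) = \sum_(i <- r | P i) ip z (F i).
Proof. exact: (big_morph (fun x => ip z x) (fun x y => ipDr z x y) (ip0r z)). Qed.

Definition nsq x := complex.Re (ip x x).

Lemma ip_real x : ip x x = (nsq x)%:C.
Proof. exact/ge0_real/inner_ge0. Qed.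

Lemma nsq_ge0 x : 0 <= nsq x.
Proof. by have := @inner_ge0 _ _ H x; rewrite lecE => /andP[]. Qed.

Lemma hn_ge0 x : 0 <= hn x.
Proof. exact: sqrtr_ge0. Qed.

Lemma hn_sq x : hn x ^+ 2 = nsq x.
Proof. by rewrite /hnorm sqr_sqrtr // nsq_ge0. Qed.

Lemma hnE x : hn x = Num.sqrt (nsq x).
Proof. by []. Qed.

Lemma nsq_eq0 x : nsq x = 0 -> x = 0.
Proof. by move=> h; apply: (@inner_eq0 _ _ H); rewrite ip_real h. Qed.

Lemma hn_eq0 x : hn x = 0 -> x = 0.
Proof.
move=> h; apply: nsq_eq0; apply/eqP; rewrite eq_le nsq_ge0 andbT.
by rewrite -sqrtr_eq0 -hnE h.
Qed.

Lemma hn0 : hn 0 = 0.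
Proof. by rewrite hnE /nsq ip0l /= sqrtr0. Qed.

Lemma nsqD x y : nsq (x + y) = nsq x + nsq y + 2%:R * complex.Re (ip x y).
Proof.
rewrite /nsq ipDl !ipDr (inner_conj H y x) !ReD ReJ; lra.
Qed.

Lemma nsqN x : nsq (- x) = nsq x.
Proof. by rewrite /nsq ipNl ipNr opprK. Qed.

Lemma nsqB x y : nsq (x - y) = nsq x + nsq y - 2%:R * complex.Re (ip x y).
Proof. by rewrite nsqD nsqN ipNr ReN mulrN. Qed.

Lemma nsqZ a x : nsq (a *: x) = cn a ^+ 2 * nsq x.
Proof.
by rewrite /nsq ipZl ipZr mulrA mulcJ ip_real -rmorphM.
Qed.

Lemma hnZ a x : hn (a *: x) = cn a * hn x.
Proof.
by rewrite !hnE nsqZ sqrtrM ?sqr_ge0 // sqrtr_sqr ger0_norm // cn_ge0.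
Qed.

Lemma hnN x : hn (- x) = hn x.
Proof. by rewrite !hnE nsqN. Qed.

Lemma hnB x y : hn (x - y) = hn (y - x).
Proof. by rewrite -hnN opprB. Qed.

Lemma cs x y : cn (ip x y) <= hn x * hn y.
Proof.
set c := ip x y.
have [y0|ny0] := eqVneq (nsq y) 0.
  have -> : c = 0 by rewrite /c (nsq_eq0 y0) ip0r.
  by rewrite cn0 mulr_ge0 // hn_ge0.
have ny : 0 < nsq y by rewrite lt_neqAle eq_sym ny0 nsq_ge0.
set s := (nsq y)^-1.
have h := nsq_ge0 (x - (s%:C * c) *: y).
rewrite nsqB nsqZ ipZr conjRM -/c -mulrA mulJc RCM ReR in h.
rewrite cnM cnR ger0_norm ?invr_ge0 ?(ltW ny) // in h.
have e : nsq x + (s * cn c) ^+ 2 * nsq y - 2%:R * (s * cn c ^+ 2)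
       = nsq x - cn c ^+ 2 / nsq y.
  by rewrite /s; field; rewrite ny0.
rewrite e subr_ge0 ler_pdivrMr // in h.
rewrite -(ger0_norm (cn_ge0 c)) -sqrtr_sqr !hnE -sqrtrM ?nsq_ge0 //.
by rewrite ler_sqrt // mulr_ge0 // nsq_ge0.
Qed.

Lemma hnD x y : hn (x + y) <= hn x + hn y.
Proof.
rewrite hnE -(ger0_norm (addr_ge0 (hn_ge0 x) (hn_ge0 y))) -sqrtr_sqr.
rewrite ler_sqrt ?sqr_ge0 // nsqD sqrrD !hn_sq.
have := le_trans (Re_le_cn (ip x y)) (cs x y).
lra.
Qed.

Lemma hnDB x y z : hn (x - z) <= hn (x - y) + hn (y - z).
Proof. by have := hnD (x - y) (y - z); rewrite addrA subrK. Qed.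

End IP.

End Part1.
Import Part1.

Module Part2.
Set Implicit Arguments. Unset Strict Implicit. Unset Printing Implicit Defensive.
Local Open Scope ring_scope.
Local Open Scope complex_scope.

Section Real.
Variable R : realType.

Lemma le_eps (a b : R) : (forall e, 0 < e -> a <= b + e) -> a <= b.
Proof. by move=> h; apply/ler_addgt0Pr. Qed.

Lemma archi_inv (e : R) : 0 < e -> exists N : nat, forall n, (N <= n)%N -> (n.+1%:R)^-1 < e.
Proof.
move=> e0; exists (Num.bound (e^-1)) => n Nn.
have ei : 0 < e^-1 by rewrite invr_gt0.
have h := archi_boundP (ltW ei).
rewrite -(invrK e) ltf_pV2 ?posrE ?invr_gt0 ?ltr0Sn //.
apply: (lt_le_trans h); rewrite ler_nat; exact: leqW.
Qed.

Lemma sqrtD_le (a b : R) : 0 <= a -> 0 <= b -> Num.sqrt (a + b) <= Num.sqrt a + Num.sqrt b.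
Proof.
move=> a0 b0.
rewrite -(ger0_norm (addr_ge0 (sqrtr_ge0 a) (sqrtr_ge0 b))) -sqrtr_sqr ler_sqrt ?sqr_ge0 //.
rewrite sqrrD !sqr_sqrtr //.
have := mulr_ge0 (sqrtr_ge0 a) (sqrtr_ge0 b); lra.
Qed.

End Real.

Section Lin.
Variable R : realType.
Local Notation C := R[i].
Variables V W : lmodType C.
Variable T : V -> W.
Hypothesis lT : is_linear T.

Lemma lin0 : T 0 = 0.
Proof.
have := lT 1 0 0; rewrite scale1r addr0 scale1r => h.
by apply/eqP; rewrite -(addrI _ (esym (etrans (addr0 _) h))).
Qed.

Lemma linD x y : T (x + y) = T x + T y.
Proof. by have := lT 1 x y; rewrite !scale1r. Qed.

Lemma linZ a x : T (a *: x) = a *: T x.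
Proof. by have := lT a x 0; rewrite !addr0 lin0 addr0. Qed.

Lemma linN x : T (- x) = - T x.
Proof. by rewrite -scaleN1r linZ scaleN1r. Qed.

Lemma linB x y : T (x - y) = T x - T y.
Proof. by rewrite linD linN. Qed.

Lemma lin_sum I (r : seq I) (P : pred I) (F : I -> V) :
  T (\sum_(i <- r | P i) F i) = \sum_(i <- r | P i) T (F i).
Proof. exact: (big_morph T linD lin0). Qed.

End Lin.

Lemma is_linear_comp (R : realType) (U V W : lmodType R[i]) (S : V -> W) (T : U -> V) :
  is_linear S -> is_linear T -> is_linear (S \o T).
Proof. by move=> lS lT a x y /=; rewrite lT lS. Qed.

Section Conv.
Variable R : realType.
Local Notation C := R[i].
Variable V : lmodType C.
Variable H : hilbert V.
Local Notation ip := (inner H).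
Local Notation hn := (hnorm H).
Local Notation cvg := (hconverges H).

Lemma cvg_uniq u l l' : cvg u l -> cvg u l' -> l = l'.
Proof.
move=> h1 h2; apply/eqP; rewrite -subr_eq0; apply/eqP; apply: (@hn_eq0 _ _ H).
apply/eqP; rewrite eq_le hn_ge0 andbT.
apply: le_eps => e e0.
have e2 : 0 < e / 2%:R by rewrite divr_gt0 // ltr0n.
have [N1 hN1] := h1 _ e2; have [N2 hN2] := h2 _ e2.
have := hN1 (maxn N1 N2) (leq_maxl _ _); have := hN2 (maxn N1 N2) (leq_maxr _ _).
have := hnDB H l (u (maxn N1 N2)) l'; rewrite (hnB H l (u _)) add0r.
have he : e / 2%:R + e / 2%:R = e by field.
lra.
Qed.

Lemma cvgD u w l m : cvg u l -> cvg w m -> cvg (fun n => u n + w n) (l + m).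
Proof.
move=> h1 h2 e e0.
have e2 : 0 < e / 2%:R by rewrite divr_gt0 // ltr0n.
have [N1 hN1] := h1 _ e2; have [N2 hN2] := h2 _ e2.
exists (maxn N1 N2) => n Nn.
have := hN1 n (leq_trans (leq_maxl _ _) Nn); have := hN2 n (leq_trans (leq_maxr _ _) Nn).
have -> : u n + w n - (l + m) = (u n - l) + (w n - m) by rewrite opprD addrACA.
have := hnD H (u n - l) (w n - m).
have he : e / 2%:R + e / 2%:R = e by field.
lra.
Qed.

Lemma cvgZ a u l : cvg u l -> cvg (fun n => a *: u n) (a *: l).
Proof.
move=> h e e0.
have e1 : 0 < e / (cn a + 1) by rewrite divr_gt0 // ltr_wpDl // cn_ge0.
have [N hN] := h _ e1; exists N => n Nn.
rewrite -scalerBr hnZ.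
have := hN n Nn; rewrite ltr_pdivlMr ?ltr_wpDl ?cn_ge0 // => h'.
apply: le_lt_trans h'; rewrite mulrC ler_wpM2l ?hn_ge0 //; lra.
Qed.

Lemma cvgC l : cvg (fun _ => l) l.
Proof. by move=> e e0; exists 0%N => n _; rewrite subrr hn0. Qed.

Lemma cvg_ext u w l : (forall n, u n = w n) -> cvg u l -> cvg w l.
Proof. by move=> e h; have <- : u = w by apply: funext. Qed.

Lemma cvgN u l : cvg u l -> cvg (fun n => - u n) (- l).
Proof.
move=> h; apply: (@cvg_ext (fun n => (-1) *: u n)) => [n|]; first by rewrite scaleN1r.
rewrite -[- l]scaleN1r; exact: cvgZ.
Qed.

Lemma cvgB u w l m : cvg u l -> cvg w m -> cvg (fun n => u n - w n) (l - m).
Proof. by move=> h1 h2; apply: cvgD h1 (cvgN h2). Qed.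

Lemma cvg_evC u l N : (forall n, (N <= n)%N -> u n = l) -> cvg u l.
Proof. by move=> h e e0; exists N => n Nn; rewrite h // subrr hn0. Qed.

Lemma cvg_bound u l B : cvg u l -> (forall n, hn (u n) <= B) -> hn l <= B.
Proof.
move=> h hB; apply: le_eps => e e0.
have [N hN] := h _ e0.
have := hN N (leqnn N); have := hB N; have := hnD H (u N) (l - u N).
rewrite addrC subrK (hnB H l (u _)); lra.
Qed.

Lemma cvg_bound_ev u l B N : cvg u l -> (forall n, (N <= n)%N -> hn (u n) <= B) -> hn l <= B.
Proof.
move=> h hB; apply: le_eps => e e0.
have [N1 hN] := h _ e0.
have := hN (maxn N N1) (leq_maxr _ _); have := hB (maxn N N1) (leq_maxl _ _).
have := hnD H (u (maxn N N1)) (l - u (maxn N N1)).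
rewrite addrC subrK (hnB H l (u _)); lra.
Qed.

Lemma complete u : (forall e : R, 0 < e -> exists N, forall m n, (N <= m)%N -> (N <= n)%N ->
        hn (u m - u n) < e) -> exists l, cvg u l.
Proof. by move=> h; have [l hl] := inner_complete h; exists l. Qed.

Definition ccvg (c : nat -> C) (z : C) :=
  forall e : R, 0 < e -> exists N, forall n, (N <= n)%N -> cn (c n - z) < e.

Lemma ccvg_uniq c z z' : ccvg c z -> ccvg c z' -> z = z'.
Proof.
move=> h1 h2; apply/eqP; rewrite -subr_eq0; apply/eqP; apply: cn_eq0.
apply/eqP; rewrite eq_le cn_ge0 andbT.
apply: le_eps => e e0.
have e2 : 0 < e / 2%:R by rewrite divr_gt0 // ltr0n.
have [N1 hN1] := h1 _ e2; have [N2 hN2] := h2 _ e2.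
have := hN1 (maxn N1 N2) (leq_maxl _ _); have := hN2 (maxn N1 N2) (leq_maxr _ _).
have := cnD (z - c (maxn N1 N2)) (c (maxn N1 N2) - z').
rewrite addrA subrK (cnB z) add0r.
have he : e / 2%:R + e / 2%:R = e by field.
lra.
Qed.

Lemma cvg_ip u w l m : cvg u l -> cvg w m -> ccvg (fun n => ip (u n) (w n)) (ip l m).
Proof.
move=> h1 h2 e e0.
have [N0 hN0] := h2 _ ltr01.
set B1 := hn m + 1; set B2 := hn l + 1.
have B10 : 0 < B1 by rewrite /B1 ltr_wpDl // hn_ge0.
have B20 : 0 < B2 by rewrite /B2 ltr_wpDl // hn_ge0.
have e1 : 0 < e / 2%:R / B1 by rewrite !divr_gt0 // ltr0n.
have e2 : 0 < e / 2%:R / B2 by rewrite !divr_gt0 // ltr0n.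
have [N1 hN1] := h1 _ e1; have [N2 hN2] := h2 _ e2.
exists (maxn N0 (maxn N1 N2)) => n Nn.
have n0 : (N0 <= n)%N by apply: leq_trans Nn; apply: leq_maxl.
have n1 : (N1 <= n)%N by apply: leq_trans Nn; rewrite leq_max leq_maxl orbT.
have n2 : (N2 <= n)%N by apply: leq_trans Nn; rewrite leq_max leq_maxr orbT.
have -> : ip (u n) (w n) - ip l m = ip (u n - l) (w n) + ip l (w n - m).
  by rewrite ipBl ipBr addrA subrK.
apply: (le_lt_trans (cnD _ _)).
have c1 := cs H (u n - l) (w n); have c2 := cs H l (w n - m).
have wb : hn (w n) <= B1.
  have := hN0 n n0; have := hnD H (w n - m) m; rewrite subrK /B1; lra.
have t1 : hn (u n - l) * hn (w n) < e / 2%:R.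
  have := hN1 n n1; rewrite ltr_pdivlMr // => h.
  apply: (le_lt_trans _ h); apply: ler_wpM2l; [exact: hn_ge0 | exact: wb].
have t2 : hn l * hn (w n - m) < e / 2%:R.
  have := hN2 n n2; rewrite ltr_pdivlMr // => h.
  apply: (le_lt_trans _ h); rewrite mulrC; apply: ler_wpM2l; first exact: hn_ge0.
  rewrite /B2; lra.
have he : e / 2%:R + e / 2%:R = e by field.
lra.
Qed.

End Conv.

Section Bounded.
Variable R : realType.
Local Notation C := R[i].
Variables V W : lmodType C.
Variable HV : hilbert V.
Variable HW : hilbert W.

Lemma bounded_pos (T : V -> W) : bounded_op HV HW T ->
  exists2 M : R, 0 < M & forall x, hnorm HW (T x) <= M * hnorm HV x.
Proof.
case=> _ [M hM]; exists (`|M| + 1); first by rewrite ltr_wpDl.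
move=> x; apply: (le_trans (hM x)); apply: ler_wpM2r; first exact: hn_ge0.
have := ler_norm M; lra.
Qed.

Lemma cvg_op (T : V -> W) u l : bounded_op HV HW T ->
  hconverges HV u l -> hconverges HW (fun n => T (u n)) (T l).
Proof.
move=> bT h e e0; have [M M0 hM] := bounded_pos bT.
have [N hN] := h _ (divr_gt0 e0 M0); exists N => n Nn.
rewrite -(linB bT.1); apply: (le_lt_trans (hM _)).
by rewrite mulrC -ltr_pdivlMr //; apply: hN.
Qed.

End Bounded.

End Part2.
Import Part2.

Module Part3.
Set Implicit Arguments. Unset Strict Implicit. Unset Printing Implicit Defensive.
Local Open Scope ring_scope.
Local Open Scope complex_scope.

Section Proj.
Variable R : realType.
Local Notation C := R[i].
Variable V : lmodType C.
Variable H : hilbert V.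
Local Notation ip := (inner H).
Local Notation hn := (hnorm H).
Local Notation nsq := (nsq H).
Local Notation cvg := (hconverges H).

Lemma hn_lt z (e : R) : 0 < e -> nsq z < e ^+ 2 -> hn z < e.
Proof.
move=> e0 h; rewrite hnE -(ger0_norm (ltW e0)) -sqrtr_sqr ltr_sqrt //.
exact: exprn_gt0.
Qed.

Lemma parallel u w : nsq (u - w) + nsq (u + w) = 2%:R * nsq u + 2%:R * nsq w.
Proof. rewrite nsqB nsqD; lra. Qed.

Lemma cn2 : cn (2%:R : C) = 2%:R.
Proof. exact: cn_nat. Qed.

Variable M : V -> Prop.
Hypothesis M0 : M 0.
Hypothesis MD : forall x y, M x -> M y -> M (x + y).
Hypothesis MZ : forall a x, M x -> M (a *: x).
Hypothesis Mcl : forall x, (forall e : R, 0 < e -> exists m, M m /\ hn (x - m) < e) -> M x.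

Lemma proj_exists x : exists p, M p /\ forall m, M m -> ip (x - p) m = 0.
Proof.
pose S : set R := fun r => exists m, M m /\ r = nsq (x - m).
have hS : has_inf S.
  split; first by exists (nsq (x - 0)); exists 0.
  by exists 0 => r [m [_ ->]]; exact: nsq_ge0.
set d := inf S.
have lb : forall m, M m -> d <= nsq (x - m).
  by move=> m Mm; apply: (ge_inf hS.2); exists m.
have d0 : 0 <= d.
  rewrite leNgt; apply/negP => dlt.
  have nd : 0 < - d by rewrite oppr_gt0.
  have [r [m [_ ->]] h] := inf_adherent nd hS.
  by move: h; rewrite /d subrr ltNge nsq_ge0.
pose eps (n : nat) : R := (n.+1%:R)^-1.
have eps0 n : 0 < eps n by rewrite /eps invr_gt0 ltr0Sn.
have ad : forall n, exists m, M m /\ nsq (x - m) < d + eps n.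
  move=> n; have [r [m [Mm ->]] h] := inf_adherent (eps0 n) hS.
  by exists m.
have [ms hms] := choice ad.
have cau : forall a b, nsq (ms a - ms b) <= 2%:R * eps a + 2%:R * eps b.
  move=> a b.
  have := parallel (x - ms b) (x - ms a).
  have -> : x - ms b - (x - ms a) = ms a - ms b.
    by rewrite opprB addrC addrA subrK.
  have -> : x - ms b + (x - ms a) = 2%:R *: (x - (2%:R^-1 *: (ms a + ms b))).
    rewrite scalerBr scalerA divff ?pnatr_eq0 // scale1r scaler_nat mulr2n.
    by rewrite addrACA opprD (addrC (- ms a)).
  rewrite nsqZ cn2.
  have := lb _ (MZ (2%:R^-1) (MD (hms a).1 (hms b).1)).
  have := (hms a).2; have := (hms b).2.
  lra.
have [p hp] : exists p, cvg ms p.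
  apply: complete => e e0.
  have e4 : 0 < e ^+ 2 / 4%:R by rewrite divr_gt0 ?exprn_gt0 ?ltr0n.
  have [N hN] := archi_inv e4.
  exists N => a b Na Nb; apply: hn_lt => //.
  apply: (le_lt_trans (cau a b)).
  have ha : eps a < e ^+ 2 / 4%:R := hN a Na.
  have hb : eps b < e ^+ 2 / 4%:R := hN b Nb.
  have : e ^+ 2 = 4%:R * (e ^+ 2 / 4%:R) by field.
  move: ha hb; set E := e ^+ 2 / 4%:R; set ea := eps a; set eb := eps b.
  lra.
have Mp : M p.
  apply: Mcl => e e0; have [N hN] := hp e e0.
  by exists (ms N); split; [exact: (hms N).1 | rewrite hnB; exact: hN].
have pmin : nsq (x - p) <= d.
  have : hn (x - p) <= Num.sqrt d.
    apply: le_eps => e e0.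
    have e2 : 0 < e / 2%:R by rewrite divr_gt0 ?ltr0n.
    have e4 : 0 < (e / 2%:R) ^+ 2 by rewrite exprn_gt0.
    have [N1 hN1] := hp _ e2.
    have [N2 hN2] := archi_inv e4.
    set n := maxn N1 N2.
    have h1 := hN1 n (leq_maxl _ _).
    have h2 := hN2 n (leq_maxr _ _).
    have h3 := hnDB H x (ms n) p.
    have h4 : hn (x - ms n) <= Num.sqrt d + Num.sqrt (eps n).
      apply: le_trans (sqrtD_le d0 (ltW (eps0 n))).
      by rewrite hnE ler_sqrt ?addr_ge0 ?(ltW (eps0 n)) // ltW // (hms n).2.
    have h5 : Num.sqrt (eps n) < e / 2%:R.
      rewrite -(ger0_norm (ltW e2)) -sqrtr_sqr ltr_sqrt //.
    have he : e / 2%:R + e / 2%:R = e by field.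
    lra.
  move=> h; rewrite -hn_sq -(sqr_sqrtr d0).
  by rewrite lerXn2r ?nnegrE ?hn_ge0 ?sqrtr_ge0.
exists p; split => // m Mm.
set c := ip (x - p) m.
set z := nsq m.
have z0 : 0 <= z := nsq_ge0 H m.
set s := (z + 1)^-1.
have s0 : 0 < s by rewrite /s invr_gt0 ltr_wpDl.
have sz : s * z <= 1.
  by rewrite /s mulrC ler_pdivrMr ?ltr_wpDl // mul1r lerDl.
have h := lb _ (MD Mp (MZ (s%:C * c) Mm)).
have ee : x - (p + (s%:C * c) *: m) = (x - p) - (s%:C * c) *: m by rewrite opprD addrA.
rewrite ee in h.
rewrite nsqB nsqZ ipZr conjRM -/c -mulrA mulJc RCM ReR cnM cnR ger0_norm ?(ltW s0) // in h.
set q := cn c ^+ 2 in h.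
have q0 : 0 <= q by rewrite /q sqr_ge0.
have key : (s * cn c) ^+ 2 * z - 2%:R * (s * q) = - (s * q) * (2%:R - s * z).
  by rewrite /q; ring.
have : 0 <= (s * cn c) ^+ 2 * z - 2%:R * (s * q) by move: h pmin; rewrite -/z; lra.
rewrite key => h6.
have sq0 : s * q <= 0.
  have t : 0 < 2%:R - s * z by lra.
  by rewrite -(pmulr_rle0 _ t) mulrC; lra.
have : q <= 0 by rewrite -(pmulr_rle0 _ s0).
move=> qle; apply: cn_eq0; apply/eqP; rewrite -sqrf_eq0; apply/eqP.
by apply/eqP; rewrite eq_le qle q0.
Qed.

End Proj.

Section Riesz.
Variable R : realType.
Local Notation C := R[i].
Variable V : lmodType C.
Variable H : hilbert V.
Local Notation ip := (inner H).
Local Notation hn := (hnorm H).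
Local Notation nsq := (nsq H).

Variable f : V -> C.
Hypothesis flin : forall a x y, f (a *: x + y) = a * f x + f y.
Hypothesis fbd : exists K : R, forall x, cn (f x) <= K * hn x.

Let f0 : f 0 = 0.
Proof.
have := flin 1 0 0; rewrite scale1r addr0 mul1r => h.
by apply/eqP; rewrite -(addrI _ (esym (etrans (addr0 _) h))).
Qed.
Let fD x y : f (x + y) = f x + f y.
Proof. by have := flin 1 x y; rewrite scale1r mul1r. Qed.
Let fZ a x : f (a *: x) = a * f x.
Proof. by have := flin a x 0; rewrite !addr0 f0 addr0. Qed.
Let fB x y : f (x - y) = f x - f y.
Proof. by rewrite fD -scaleN1r fZ mulN1r. Qed.

Lemma riesz : exists z, forall x, f x = ip x z.
Proof.
have [K hK] := fbd.
pose M := fun x => f x = 0.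
have Mcl : forall x, (forall e : R, 0 < e -> exists m, M m /\ hn (x - m) < e) -> M x.
  move=> x h; apply: cn_eq0; apply/eqP; rewrite eq_le cn_ge0 andbT.
  apply: le_eps => e e0; rewrite add0r.
  have K0 : 0 < `|K| + 1 by rewrite ltr_wpDl.
  have [m [Mm hm]] := h _ (divr_gt0 e0 K0).
  have : f x = f (x - m) by rewrite fB Mm subr0.
  move=> ->; apply: (le_trans (hK _)).
  apply: (le_trans (y := (`|K| + 1) * hn (x - m))).
    apply: ler_wpM2r; first exact: hn_ge0.
    have := ler_norm K; lra.
  by rewrite mulrC -ler_pdivlMr // ltW.
case: (pselect (exists x, f x <> 0)) => [[x0 hx0]|hne]; last first.
  exists 0 => x; rewrite ip0r.
  by case: (pselect (f x = 0)) => // hx; exfalso; apply: hne; exists x.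
  have [p [Mp hp]] := proj_exists (M := M) f0
     (fun x y (hx : M x) (hy : M y) => etrans (fD x y) (etrans (congr2 _ hx hy) (addr0 0)))
     (fun a x (hx : M x) => etrans (fZ a x) (etrans (congr1 _ hx) (mulr0 a))) Mcl x0.
  set w := x0 - p in hp.
  have fw : f w <> 0 by rewrite /w fB Mp subr0.
  have nw : nsq w != 0.
    apply/eqP => /(nsq_eq0) w0; apply: fw; by rewrite w0 f0.
  have nwC : (nsq w)%:C != 0.
    by apply/eqP => h; move/eqP: nw; apply; apply: (@complexI R); exact: h.
  exists (((f w / (nsq w)%:C)^*)%C *: w) => x.
  have hm := hp (x - (f x / f w) *: w).
  have : M (x - (f x / f w) *: w).
    by rewrite /M fB fZ divfK ?subrr //; apply/eqP.
  move=> /hm; rewrite ipBr ipZr => e.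
  have e2 : ip x w = f x / f w * (nsq w)%:C.
    have := congr1 (fun z => (z^*)%C) e.
    have z0 : ((- 0)*i : C) = 0 by rewrite oppr0.
    rewrite rmorphB rmorphM /= conjcK -!inner_conj ip_real z0 => /eqP.
    by rewrite subr_eq0 => /eqP ->.
  rewrite ipZr conjcK e2; field.
  by apply/andP; split => //; apply/eqP.
Qed.

End Riesz.

End Part3.
Import Part3.

Module Part4.
Set Implicit Arguments. Unset Strict Implicit. Unset Printing Implicit Defensive.
Local Open Scope ring_scope.
Local Open Scope complex_scope.

Definition vsum (R : realType) (I : Type) (V : lmodType R[i]) (g : I -> V) (L : seq (R[i] * I)) : V :=
  \sum_(c <- L) c.1 *: g c.2.

Definition sl (R : realType) (I : Type) (a : R[i]) (L : seq (R[i] * I)) :=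
  [seq (a * c.1, c.2) | c <- L].

Section VS.
Variable R : realType.
Local Notation C := R[i].
Variable I : Type.
Variable V : lmodType C.
Variable g : I -> V.

Lemma vsum_cat L L' : vsum g (L ++ L') = vsum g L + vsum g L'.
Proof. by rewrite /vsum big_cat. Qed.

Lemma vsum_sl a L : vsum g (sl a L) = a *: vsum g L.
Proof.
rewrite /vsum /sl big_map scaler_sumr; apply: eq_bigr => c _ /=.
by rewrite scalerA.
Qed.

Lemma vsum_nil : vsum g [::] = 0.
Proof. by rewrite /vsum big_nil. Qed.

Lemma vsum1 i : vsum g [:: (1, i)] = g i.
Proof. by rewrite /vsum big_seq1 scale1r. Qed.

Lemma vsum_sub L L' : vsum g L - vsum g L' = vsum g (L ++ sl (-1) L').
Proof. by rewrite vsum_cat vsum_sl scaleN1r. Qed.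

End VS.

Section Ext.
Variable R : realType.
Local Notation C := R[i].
Variables X Xt : lmodType C.
Variable HX : hilbert X.
Variable HXt : hilbert Xt.
Variable I : Type.
Variable g : I -> X.
Variable gt : I -> Xt.
Hypothesis gip : forall i j, inner HX (g i) (g j) = inner HXt (gt i) (gt j).
Hypothesis gdense : forall x, (forall i, inner HX x (g i) = 0) -> x = 0.

Lemma ip_vsum L L' : inner HX (vsum g L) (vsum g L') = inner HXt (vsum gt L) (vsum gt L').
Proof.
rewrite /vsum ip_suml ip_suml; apply: eq_bigr => c _.
rewrite !ip_sumr; apply: eq_bigr => c' _.
by rewrite !ipZl !ipZr gip.
Qed.

Lemma hn_vsum L L' : hnorm HX (vsum g L - vsum g L') = hnorm HXt (vsum gt L - vsum gt L').
Proof. by rewrite !vsum_sub !hnE /nsq ip_vsum. Qed.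

Definition Mset x := forall e : R, 0 < e -> exists L, hnorm HX (x - vsum g L) < e.

Lemma dense x : Mset x.
Proof.
have M0 : Mset 0 by move=> e e0; exists [::]; rewrite vsum_nil subrr hn0.
have MD : forall x y, Mset x -> Mset y -> Mset (x + y).
  move=> x1 y1 h1 h2 e e0.
  have e2 : 0 < e / 2%:R by rewrite divr_gt0 ?ltr0n.
  have [L1 hL1] := h1 _ e2; have [L2 hL2] := h2 _ e2.
  exists (L1 ++ L2); rewrite vsum_cat.
  have -> : x1 + y1 - (vsum g L1 + vsum g L2) = (x1 - vsum g L1) + (y1 - vsum g L2).
    by rewrite opprD addrACA.
  have := hnD HX (x1 - vsum g L1) (y1 - vsum g L2).
  have he : e / 2%:R + e / 2%:R = e by field.
  lra.
have MZ : forall a x, Mset x -> Mset (a *: x).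
  move=> a x1 h e e0.
  have e1 : 0 < e / (cn a + 1) by rewrite divr_gt0 // ltr_wpDl // cn_ge0.
  have [L hL] := h _ e1; exists (sl a L).
  rewrite vsum_sl -scalerBr hnZ.
  move: hL; rewrite ltr_pdivlMr ?ltr_wpDl ?cn_ge0 // => h'.
  apply: le_lt_trans h'; rewrite mulrC ler_wpM2l ?hn_ge0 //; lra.
have Mcl : forall x, (forall e : R, 0 < e -> exists m, Mset m /\ hnorm HX (x - m) < e) -> Mset x.
  move=> x1 h e e0.
  have e2 : 0 < e / 2%:R by rewrite divr_gt0 ?ltr0n.
  have [m [Mm hm]] := h _ e2; have [L hL] := Mm _ e2.
  exists L; have := hnDB HX x1 m (vsum g L).
  have he : e / 2%:R + e / 2%:R = e by field.
  lra.
have [p [Mp hp]] := proj_exists M0 MD MZ Mcl x.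
suff -> : x = p by [].
apply/eqP; rewrite -subr_eq0; apply/eqP; apply: gdense => i.
apply: hp => e e0; exists [:: (1, i)]; rewrite vsum1 subrr hn0 //.
Qed.

Lemma approx x : exists Ls : nat -> seq (C * I), hconverges HX (fun n => vsum g (Ls n)) x.
Proof.
have h : forall n : nat, exists L, hnorm HX (x - vsum g L) < (n.+1%:R)^-1.
  by move=> n; apply: dense; rewrite invr_gt0 ltr0Sn.
have [Ls hLs] := choice h; exists Ls => e e0.
have [N hN] := archi_inv e0; exists N => n Nn.
by rewrite hnB; apply: lt_trans (hN n Nn); apply: hLs.
Qed.

Lemma ext_exists : exists U : X -> Xt,
  forall x (K : nat -> seq (C * I)), hconverges HX (fun n => vsum g (K n)) x ->
     hconverges HXt (fun n => vsum gt (K n)) (U x).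
Proof.
have h : forall x, exists y, exists Ls : nat -> seq (C * I),
   hconverges HX (fun n => vsum g (Ls n)) x /\ hconverges HXt (fun n => vsum gt (Ls n)) y.
  move=> x; have [Ls hLs] := approx x.
  have [y hy] : exists y, hconverges HXt (fun n => vsum gt (Ls n)) y.
    apply: complete => e e0.
    have e2 : 0 < e / 2%:R by rewrite divr_gt0 ?ltr0n.
    have [N hN] := hLs _ e2; exists N => m n Nm Nn.
    rewrite -hn_vsum.
    have := hnDB HX (vsum g (Ls m)) x (vsum g (Ls n)).
    have := hN m Nm; have := hN n Nn; rewrite (hnB HX (vsum g (Ls n))).
    have he : e / 2%:R + e / 2%:R = e by field.
    lra.
  by exists y, Ls.
have [U hU] := choice h; exists U => x K hK.
have [Ls [h1 h2]] := hU x.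
move=> e e0.
have e3 : 0 < e / 3%:R by rewrite divr_gt0 ?ltr0n.
have [N1 hN1] := hK _ e3; have [N2 hN2] := h1 _ e3; have [N3 hN3] := h2 _ e3.
exists (maxn N1 (maxn N2 N3)) => n Nn.
have n1 : (N1 <= n)%N by apply: leq_trans Nn; apply: leq_maxl.
have n2 : (N2 <= n)%N by apply: leq_trans Nn; rewrite leq_max leq_maxl orbT.
have n3 : (N3 <= n)%N by apply: leq_trans Nn; rewrite leq_max leq_maxr orbT.
have := hnDB HXt (vsum gt (K n)) (vsum gt (Ls n)) (U x).
rewrite -hn_vsum.
have := hnDB HX (vsum g (K n)) x (vsum g (Ls n)).
have := hN1 n n1; have := hN2 n n2; have := hN3 n n3.
rewrite (hnB HX x (vsum g (Ls n))).
have he : e / 3%:R + e / 3%:R + e / 3%:R = e by field.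
lra.
Qed.

Variable U : X -> Xt.
Hypothesis hU : forall x (K : nat -> seq (C * I)), hconverges HX (fun n => vsum g (K n)) x ->
     hconverges HXt (fun n => vsum gt (K n)) (U x).

Lemma U_linear : is_linear U.
Proof.
move=> a x y.
have [Kx hx] := approx x; have [Ky hy] := approx y.
pose K := fun n => sl a (Kx n) ++ Ky n.
have c1 : hconverges HX (fun n => vsum g (K n)) (a *: x + y).
  apply: (@cvg_ext _ _ _ (fun n => a *: vsum g (Kx n) + vsum g (Ky n))).
    by move=> n; rewrite /K vsum_cat vsum_sl.
  exact: cvgD (cvgZ a hx) hy.
have c2 : hconverges HXt (fun n => vsum gt (K n)) (a *: U x + U y).
  apply: (@cvg_ext _ _ _ (fun n => a *: vsum gt (Kx n) + vsum gt (Ky n))).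
    by move=> n; rewrite /K vsum_cat vsum_sl.
  exact: cvgD (cvgZ a (hU hx)) (hU hy).
exact: cvg_uniq (hU c1) c2.
Qed.

Lemma U_iso x x' : inner HXt (U x) (U x') = inner HX x x'.
Proof.
have [K hK] := approx x; have [K' hK'] := approx x'.
have c1 := cvg_ip (hU hK) (hU hK').
have c2 := cvg_ip hK hK'.
apply: ccvg_uniq c1 _.
by move=> e e0; have [N hN] := c2 e e0; exists N => n Nn; rewrite -ip_vsum; apply: hN.
Qed.

End Ext.

End Part4.
Import Part4.

Module Part5.
Set Implicit Arguments. Unset Strict Implicit. Unset Printing Implicit Defensive.
Local Open Scope ring_scope.
Local Open Scope complex_scope.

Local Close Scope complex_scope.
Local Close Scope ring_scope.
Section Tup.
Lemma tuple_sum (V : nmodType) (T : finType) k (F : k.+1.-tuple T -> V) :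
  (\sum_(v : k.+1.-tuple T) F v = \sum_(j : T) \sum_(w : k.-tuple T) F (cons_tuple j w))%R.
Proof.
rewrite pair_big /= (reindex (fun p : T * k.-tuple T => cons_tuple p.1 p.2)) //=.
exists (fun t => (thead t, behead_tuple t)) => [[j w] _ | t _] /=.
  by rewrite theadE; congr pair; apply: val_inj.
by rewrite [in RHS](tuple_eta t); apply: val_inj.
Qed.

Lemma tuple0_sum (V : nmodType) (T : finType) (F : 0.-tuple T -> V) :
  (\sum_(v : 0.-tuple T) F v = F [tuple])%R.
Proof. by rewrite (big_pred1 [tuple]) // => v; apply/esym/eqP; rewrite [v]tuple0. Qed.

Lemma sum_count (T : finType) (s : seq T) : (\sum_(j : T) count_mem j s)%N = size s.
Proof.
elim: s => [|a s IH] /=; first by rewrite big1.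
rewrite big_split /= IH (bigD1 a) //= eqxx big1 // => j /negbTE.
by rewrite eq_sym => ->.
Qed.

Definition cnum d k (n : 'I_d -> nat) : nat :=
  \sum_(v : k.-tuple 'I_d) ([forall j, count_mem j v == n j] : nat).

Lemma cnum_mul d k : forall n : 'I_d -> nat, (\sum_(j < d) n j)%N = k ->
  (cnum k n * \prod_(j < d) (n j)`! = k`!)%N.
Proof.
elim: k => [|k IH] n hn.
  have n0 : forall j, n j = 0%N.
    move=> j; move/eqP: hn; rewrite sum_nat_eq0 => /forallP /(_ j) /=.
    by move/eqP.
  rewrite /cnum tuple0_sum big1 ?muln1 => [|j _]; last by rewrite n0.
  suff -> : [forall j, count_mem j [tuple] == n j] by [].
  by apply/forallP => j /=; rewrite n0.
have step : forall j, (\sum_(w : k.-tuple 'I_d)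
    ([forall i, count_mem i (cons_tuple j w) == n i] : nat) =
    if (0 < n j)%N then cnum k (fun i => n i - (j == i)) else 0)%N.
  move=> j; case: ifP => nj.
    apply: eq_bigr => w _; congr nat_of_bool.
    apply/forallP/forallP => h i; have := h i => /= /eqP h'; apply/eqP.
      by case: eqP => [ji|_] /= in h' *; [subst i|]; lia.
    by case: eqP => [ji|_] /= in h' *; [subst i|]; lia.
  apply: big1 => w _; apply/eqP; rewrite eqb0; apply/forallP => /(_ j) /=.
  by rewrite eqxx; lia.
rewrite /cnum tuple_sum.
under eq_bigr do rewrite step.
rewrite big_distrl /=.
have -> : (\sum_(j < d) ((if (0 < n j)%N then cnum k (fun i => n i - (j == i)) else 0)
           * \prod_(j0 < d) (n j0)`!) = \sum_(j < d) (n j * k`!))%N.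
  apply: eq_bigr => j _; case: ifP => nj; last by rewrite mul0n; lia.
  have hs : (\sum_(i < d) (n i - (j == i)))%N = k.
    have := hn; rewrite (bigD1 j) //= (bigD1 j (P := predT)) //= eqxx.
    have e : (\sum_(i < d | i != j) (n i - (j == i)) = \sum_(i < d | i != j) n i)%N.
      by apply: eq_bigr => i ij; rewrite eq_sym (negbTE ij) subn0.
    rewrite e.
    have -> : (n j - true = n j - 1)%N by []. move: nj; set S := (\sum_(i < d | i != j) n i)%N; move=> nj; lia.
  rewrite (bigD1 j) //= -(IH _ hs) (bigD1 j (P := predT)) //= eqxx.
  have e : (\prod_(i < d | i != j) (n i - (j == i))`! = \prod_(i < d | i != j) (n i)`!)%N.
    by apply: eq_bigr => i ij; rewrite eq_sym (negbTE ij) subn0.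
  rewrite e.
  have -> : n j = (n j - 1).+1 by lia.
  rewrite factS; set a := (n j - 1)%N; set P := (\prod_(i < d | i != j) (n i)`!)%N.
  have -> : (a.+1 - 1 = a)%N by lia.
  set c := cnum _ _; rewrite !mulnA [c * _]mulnC; by [].
by rewrite -big_distrl /= hn factS.
Qed.

End Tup.
Local Open Scope ring_scope.
Local Open Scope complex_scope.


Section Comb.
Variable R : realType.
Local Notation C := R[i].
Variable d : nat.
Variables X Y : lmodType C.
Variable A : 'I_d -> X -> X.
Hypothesis linA : forall j, is_linear (A j).
Hypothesis commA : commutative_tuple A.

Definition Tl (l : 'I_d -> C) (x : X) : X := \sum_(j < d) l j *: A j x.
Definition pw l k x := iter k (Tl l) x.

Lemma Tl_linear l : is_linear (Tl l).
Proof.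
move=> a x y; rewrite /Tl scaler_sumr -big_split; apply: eq_bigr => j _ /=.
by rewrite (linA j) scalerDr !scalerA mulrC.
Qed.

Lemma pw_linear l k : is_linear (pw l k).
Proof.
elim: k => [|k IH] a x y //=.
by rewrite /pw /= -!/(pw l k _) IH (Tl_linear l).
Qed.

Lemma apply_word_cons j (w : seq 'I_d) x : apply_word A (j :: w) x = A j (apply_word A w x).
Proof. by []. Qed.

Lemma pw_words l k x : pw l k x =
  \sum_(v : k.-tuple 'I_d) (\prod_(i <- v) l i) *: apply_word A v x.
Proof.
elim: k => [|k IH]; first by rewrite tuple0_sum big_nil scale1r.
rewrite /pw iterS -/(pw l k x) IH tuple_sum /Tl; apply: eq_bigr => j _.
rewrite (lin_sum (linA j)) scaler_sumr; apply: eq_bigr => w _.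
by rewrite (linZ (linA j)) scalerA /= big_cons.
Qed.

Lemma prod_count (l : 'I_d -> C) (v : seq 'I_d) :
  \prod_(i <- v) l i = \prod_(j < d) l j ^+ count_mem j v.
Proof.
elim: v => [|a v IH]; first by rewrite big_nil big1 // => j _; rewrite expr0.
rewrite big_cons IH /=.
under [RHS]eq_bigr do rewrite exprD.
rewrite big_split /=; congr (_ * _).
rewrite (bigD1 a) //= eqxx expr1 big1 ?mulr1 // => j /negbTE.
by rewrite eq_sym => ->; rewrite expr0.
Qed.

Lemma A_iter_comm i j c y : A i (iter c (A j) y) = iter c (A j) (A i y).
Proof. by elim: c => [|c IH] //=; rewrite commA IH. Qed.

Lemma iter_comm i j m c y : iter m (A i) (iter c (A j) y) = iter c (A j) (iter m (A i) y).
Proof. by elim: m => [|m IH] //=; rewrite IH A_iter_comm. Qed.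

Lemma foldr_shift (s : seq 'I_d) (n : 'I_d -> nat) j x :
  foldr (fun i z => iter (n i + (i == j)) (A i) z) x s =
  iter (count_mem j s) (A j) (foldr (fun i z => iter (n i) (A i) z) x s).
Proof.
elim: s => [|i s IH] /=; first by [].
rewrite IH.
case: (eqVneq i j) => [->|_]; last by rewrite /= addn0 add0n iter_comm.
rewrite -!iterD; congr iter; by rewrite [RHS]addnC addnA.
Qed.

Lemma eq_apow (n n' : 'I_d -> nat) x : n =1 n' -> apow A n x = apow A n' x.
Proof. by move=> e; rewrite /apow; elim: (enum 'I_d) => //= i s ->; rewrite e. Qed.

Lemma apow_word (v : seq 'I_d) x : apply_word A v x = apow A (fun j => count_mem j v) x.
Proof.
elim: v => [|a v IH].
  by rewrite /apow /=; elim: (enum 'I_d) => //= i s <-.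
rewrite apply_word_cons IH.
rewrite (eq_apow (n := fun j => count_mem j (a :: v)) (n' := fun i => (count_mem i v + (i == a))%N)); last first.
  by move=> i /=; rewrite addnC (eq_sym a i).
rewrite /apow foldr_shift count_uniq_mem ?enum_uniq // mem_enum.
by [].
Qed.

Variable Cop : X -> Y.
Hypothesis linC : is_linear Cop.

Lemma Ehom_pw l k x : E_hom Cop A l k x = Cop (pw l k x).
Proof.
rewrite pw_words (lin_sum linC).
pose cntf (v : k.-tuple 'I_d) : {ffun 'I_d -> 'I_k.+1} := [ffun j => inord (count_mem j v)].
have cntfE : forall v j, (cntf v j : nat) = count_mem j v.
  move=> v j; rewrite /cntf ffunE inordK // ltnS.
  by apply: (leq_trans (count_size _ _)); rewrite size_tuple.
pose G (n : {ffun 'I_d -> 'I_k.+1}) :=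
  (\prod_(j < d) l j ^+ n j) *: Cop (apow A (fun j => (n j : nat)) x).
have e1 : forall v : k.-tuple 'I_d,
    Cop ((\prod_(i <- v) l i) *: apply_word A v x) = G (cntf v).
  move=> v; rewrite (linZ linC) prod_count apow_word /G.
  congr (_ *: _); last by congr Cop; apply: eq_apow => j; rewrite cntfE.
  by apply: eq_bigr => j _; rewrite cntfE.
under eq_bigr do rewrite e1.
rewrite (partition_big cntf (fun n : {ffun 'I_d -> 'I_k.+1} => (\sum_(j < d) (n j : nat) == k)%N)); last first.
  move=> v _; under eq_bigr do rewrite cntfE.
  by rewrite sum_count size_tuple.
rewrite /E_hom; apply: eq_bigr => n hn.
rewrite (eq_bigr (fun _ => G n)); last by move=> v /andP[_ /eqP ->].
rewrite (eq_bigl (fun v => v \in [pred v | cntf v == n])) // sumr_const.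
have hc : (#|[pred v | cntf v == n]| * \prod_(j < d) (n j)`! = k`!)%N.
  rewrite -(cnum_mul (n := fun j => (n j : nat))); last by apply/eqP.
  congr (_ * _)%N; rewrite /cnum -sum1_card big_mkcond /=.
  apply: eq_bigr => v _; rewrite inE.
  have -> : (cntf v == n) = [forall j, count_mem j v == n j].
    apply/eqP/forallP => [<- j|h]; first by rewrite cntfE.
    by apply/ffunP => j; apply: val_inj; rewrite /= cntfE; apply/eqP.
  by case: [forall j, _].
rewrite /G scalerMnl; congr (_ *: _).
rewrite -hc natrM mulfK; first by rewrite mulr_natl.
by rewrite pnatr_eq0 -lt0n prodn_gt0 // => j; rewrite fact_gt0.
Qed.

End Comb.

End Part5.
Import Part5.

Module Part6.
Set Implicit Arguments. Unset Strict Implicit. Unset Printing Implicit Defensive.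
Local Open Scope ring_scope.
Local Open Scope complex_scope.

Section Geo.
Variable R : realType.

Lemma geo_sum (r : R) n : 0 <= r -> r < 1 -> \sum_(k < n) r ^+ k <= (1 - r)^-1.
Proof.
move=> r0 r1.
have h := subrX1 r n.
have e : \sum_(k < n) r ^+ k = (1 - r ^+ n) / (1 - r).
  apply: (@mulIf _ (1 - r)); first by rewrite subr_eq0 eq_sym lt_eqF.
  rewrite divfK ?subr_eq0 ?(eq_sym 1) ?lt_eqF //.
  by rewrite mulrC -[1 - r]opprB mulNr -h opprB.
rewrite e ler_pdivrMr ?subr_gt0 // mulVf ?subr_eq0 ?(eq_sym 1) ?lt_eqF //.
by rewrite gerBl exprn_ge0.
Qed.

Lemma geo_tail (r : R) n m : 0 <= r -> r < 1 ->
  \sum_(n <= k < m) r ^+ k <= r ^+ n / (1 - r).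
Proof.
move=> r0 r1.
rewrite -{1}[n]add0n big_addn.
under eq_bigr do rewrite exprD.
rewrite -mulr_suml big_mkord mulrC ler_wpM2l ?exprn_ge0 //.
exact: geo_sum.
Qed.

Lemma bernoulli (h : R) n : 0 <= h -> 1 + n%:R * h <= (1 + h) ^+ n.
Proof.
move=> h0; elim: n => [|n IH]; first by rewrite mul0r addr0 expr0.
rewrite exprS -natr1.
have p : 0 <= n%:R * h by rewrite mulr_ge0.
have := ler_wpM2l (addr_ge0 ler01 h0 : 0 <= 1 + h) IH.
have : 0 <= h * (n%:R * h) by rewrite mulr_ge0.
nra.
Qed.

Lemma pow_small (r : R) : 0 <= r -> r < 1 ->
  forall e, 0 < e -> exists N, forall n, (N <= n)%N -> r ^+ n < e.
Proof.
move=> r0 r1 e e0.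
have [->|rn0] := eqVneq r 0.
  by exists 1%N => n n1; rewrite expr0n; case: n n1 => //.
have rp : 0 < r by rewrite lt_neqAle eq_sym rn0.
set h := r^-1 - 1.
have h0 : 0 < h by rewrite /h subr_gt0 invf_gt1.
have hb : 0 <= (e * h)^-1 by rewrite invr_ge0 ltW // mulr_gt0.
exists (Num.bound (e * h)^-1) => n Nn.
have nb : (e * h)^-1 < n%:R.
  apply: lt_le_trans (archi_boundP hb) _; by rewrite ler_nat.
have rinv : r = (1 + h)^-1 by rewrite /h addrC subrK invrK.
have b := bernoulli n (ltW h0).
have pos : 0 < 1 + n%:R * h by rewrite ltr_wpDr ?mulr_ge0 ?ler0n ?ltW.
have pos2 : 0 < (1 + h) ^+ n by apply: exprn_gt0; rewrite ltr_wpDr ?ltW.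
rewrite rinv exprVn.
apply: (le_lt_trans (y := (1 + n%:R * h)^-1)); first by rewrite lef_pV2 ?posrE.
have h1 : e^-1 < n%:R * h by rewrite -ltr_pdivrMr // -invfM.
rewrite -[(1 + _)^-1]mul1r ltr_pdivrMr //.
have : 1 < e * (n%:R * h).
  by rewrite -ltr_pdivrMl // mulr1.
have : 0 < e * 1 by rewrite mulr1.
nra.
Qed.

End Geo.

Section Series.
Variable R : realType.
Local Notation C := R[i].
Variable V : lmodType C.
Variable H : hilbert V.
Local Notation hn := (hnorm H).
Local Notation cvg := (hconverges H).

Lemma hn_sum I (r : seq I) (P : pred I) (F : I -> V) :
  hn (\sum_(i <- r | P i) F i) <= \sum_(i <- r | P i) hn (F i).
Proof.
elim/big_rec2: _ => [|i y1 y2 _ h]; first by rewrite hn0.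
by apply: le_trans (hnD H _ _) _; rewrite lerD2l.
Qed.

Lemma psum_sub (a : nat -> V) n m : (n <= m)%N ->
  \sum_(k < m) a k - \sum_(k < n) a k = \sum_(n <= k < m) a k.
Proof.
move=> nm; rewrite -!(big_mkord xpredT) (big_cat_nat (leq0n n) nm) /=.
by rewrite addrC addrK.
Qed.

Lemma series_cvg (a : nat -> V) (K r : R) : 0 <= r -> r < 1 ->
  (forall k, hn (a k) <= K * r ^+ k) ->
  exists l, cvg (fun N => \sum_(k < N) a k) l /\ hn l <= K / (1 - r).
Proof.
move=> r0 r1 ha.
have K0 : 0 <= K by have := ha 0%N; rewrite expr0 mulr1; apply: le_trans; exact: hn_ge0.
have r1' : 0 < 1 - r by rewrite subr_gt0.
have tail : forall n m, (n <= m)%N -> hn (\sum_(n <= k < m) a k) <= K * (r ^+ n / (1 - r)).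
  move=> n m nm; apply: le_trans; first exact: hn_sum.
  apply: le_trans (ler_sum _ (fun k _ => ha k)) _.
  rewrite -mulr_sumr ler_wpM2l //; exact: geo_tail.
have [l hl] : exists l, cvg (fun N => \sum_(k < N) a k) l.
  apply: complete => e e0.
  have ee : 0 < e * (1 - r) / (K + 1) by rewrite !mulr_gt0 // invr_gt0 ltr_wpDl.
  have [N hN] := pow_small r0 r1 ee.
  have key : forall n m, (N <= n)%N -> (n <= m)%N -> hn (\sum_(k < m) a k - \sum_(k < n) a k) < e.
    move=> n m Nn nm; rewrite psum_sub //; apply: le_lt_trans (tail n m nm) _.
    have := hN n Nn; rewrite ltr_pdivlMr ?ltr_wpDl // => h.
    rewrite mulrA ltr_pdivrMr //.
    apply: le_lt_trans h; rewrite mulrC; apply: ler_wpM2l; [exact: exprn_ge0 | lra].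
  exists N => m n Nm Nn; case: (leqP n m) => nm; first exact: key.
  by rewrite hnB; apply: key => //; apply: ltnW.
exists l; split => //.
apply: cvg_bound hl _ => N.
apply: le_trans; first exact: hn_sum.
apply: (le_trans (y := \sum_(k < N) K * r ^+ k)); first by apply: ler_sum => k _; exact: ha.
rewrite -mulr_sumr ler_wpM2l //; exact: geo_sum.
Qed.

Lemma ident (a : nat -> V) (K d : R) : 0 < d -> (forall k, hn (a k) <= K) ->
  (forall t : R, 0 < t -> t < d -> cvg (fun N => \sum_(k < N) (t ^+ k)%:C *: a k) 0) ->
  forall k, a k = 0.
Proof.
move=> d0 hK hc; elim/ltn_ind => m IH.
have K0 : 0 <= K by apply: le_trans (hK 0%N); exact: hn_ge0.
have key : forall t, 0 < t -> t < d -> t <= 2%:R^-1 -> hn (a m) <= 2%:R * K * t.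
  move=> t t0 td t2.
  have tm0 : 0 < t ^+ m by exact: exprn_gt0.
  suff : t ^+ m * hn (a m) <= 2%:R * K * t ^+ m.+1.
    move=> h; have e : 2%:R * K * t ^+ m.+1 = t ^+ m * (2%:R * K * t) by rewrite exprSr; ring.
    by rewrite e ler_pM2l // in h.
  apply: le_eps => e e0.
  have [N0 hN0] := hc t t0 td e e0.
  set N := maxn N0 m.+1.
  have := hN0 N (leq_maxl _ _); rewrite subr0.
  rewrite -(big_mkord xpredT (fun k => (t ^+ k)%:C *: a k)).
  rewrite (big_cat_nat (leq0n m) (_ : (m <= N)%N)); last first.
    by apply: leq_trans (leq_maxr _ _); apply: leqnSn.
  rewrite big1_seq /=; last first.
    by move=> k; rewrite mem_index_iota => /andP[_ km]; rewrite IH // scaler0.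
  rewrite add0r (big_cat_nat (leqnSn m) (leq_maxr _ _ : (m.+1 <= N)%N)) /= big_nat1.
  move=> hS.
  have h1 : hn ((t ^+ m)%:C *: a m) = t ^+ m * hn (a m).
    by rewrite hnZ cnR ger0_norm // ltW.
  have h2 : hn (\sum_(m.+1 <= i < N) (t ^+ i)%:C *: a i) <= K * (t ^+ m.+1 / (1 - t)).
    apply: le_trans; first exact: hn_sum.
    apply: (le_trans (y := \sum_(m.+1 <= i < N) K * t ^+ i)).
      have tp : 0 <= t by exact: ltW.
      apply: ler_sum => i _; rewrite hnZ cnR ger0_norm ?exprn_ge0 // [K * _]mulrC.
      by apply: ler_wpM2l; [apply: exprn_ge0 | exact: hK].
    rewrite -mulr_sumr ler_wpM2l //; apply: geo_tail; first exact: ltW.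
    by apply: le_lt_trans t2 _; rewrite invf_lt1 ?ltr0n ?ltr1n.
  have h3 : K * (t ^+ m.+1 / (1 - t)) <= 2%:R * K * t ^+ m.+1.
    rewrite mulrA -mulrA [2%:R * _]mulrC -mulrA ler_wpM2l //.
    have t1 : 0 < 1 - t by rewrite subr_gt0; apply: le_lt_trans t2 _; rewrite invf_lt1 ?ltr0n ?ltr1n.
    rewrite ler_pdivrMr //.
    have tp : 0 <= t ^+ m.+1 by apply: exprn_ge0; exact: ltW.
    have : 2%:R * t <= 1 by rewrite -ler_pdivlMl ?ltr0n // mulr1.
    set p := t ^+ m.+1 in tp *; nra.
  have h4 := hnD H ((t ^+ m)%:C *: a m) (\sum_(m.+1 <= i < N) (t ^+ i)%:C *: a i).
  have h5 := hnD H ((t ^+ m)%:C *: a m + \sum_(m.+1 <= i < N) (t ^+ i)%:C *: a i)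
                   (- \sum_(m.+1 <= i < N) (t ^+ i)%:C *: a i).
  rewrite addrK hnN in h5.
  rewrite -h1; lra.
apply: (@hn_eq0 _ _ H); apply/eqP; rewrite eq_le hn_ge0 andbT; apply: le_eps => e e0.
rewrite add0r.
have K1 : 0 < 2%:R * K + 1 by rewrite ltr_wpDl // mulr_ge0 ?ler0n.
set t := Num.min (Num.min (d / 2%:R) (2%:R^-1)) (e / (2%:R * K + 1)).
have t0 : 0 < t by rewrite !lt_min !divr_gt0 ?ltr0n // invr_gt0 ltr0n.
have tdd : t <= d / 2%:R by rewrite /t !ge_min lexx.
have td : t < d by apply: le_lt_trans tdd _; rewrite ltr_pdivrMr ?ltr0n //; lra.
have t2 : t <= 2%:R^-1 by rewrite /t !ge_min lexx orbT.
have te : t <= e / (2%:R * K + 1) by rewrite /t !ge_min lexx orbT.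
apply: le_trans (key t t0 td t2) _.
apply: (le_trans (y := 2%:R * K * (e / (2%:R * K + 1)))).
  by apply: ler_wpM2l => //; rewrite mulr_ge0 ?ler0n.
rewrite mulrA ler_pdivrMr //; nra.
Qed.

End Series.

End Part6.
Import Part6.

Module Part7.
Set Implicit Arguments. Unset Strict Implicit. Unset Printing Implicit Defensive.
Local Open Scope ring_scope.
Local Open Scope complex_scope.

Section RCS.
Variable R : realType.

Lemma real_cs (I : finType) (al be : I -> R) :
  \sum_(i : I) al i * be i <= Num.sqrt (\sum_i al i ^+ 2) * Num.sqrt (\sum_i be i ^+ 2).
Proof.
set A := \sum_i al i ^+ 2; set B := \sum_i be i ^+ 2.
have A0 : 0 <= A by apply: sumr_ge0 => i _; exact: sqr_ge0.
have B0 : 0 <= B by apply: sumr_ge0 => i _; exact: sqr_ge0.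
set sa := Num.sqrt A; set sb := Num.sqrt B.
have sa0 : 0 <= sa := sqrtr_ge0 A.
have sb0 : 0 <= sb := sqrtr_ge0 B.
have [Ae|An] := eqVneq A 0.
  have z : forall i, al i = 0.
    move=> i; apply/eqP; rewrite -sqrf_eq0; apply/eqP.
    by move/eqP: Ae; rewrite psumr_eq0 => [/allP /(_ i (mem_index_enum i)) /implyP /(_ isT) /eqP|j _]; [|exact: sqr_ge0].
  by rewrite big1 ?mulr_ge0 // => i _; rewrite z mul0r.
have [Be|Bn] := eqVneq B 0.
  have z : forall i, be i = 0.
    move=> i; apply/eqP; rewrite -sqrf_eq0; apply/eqP.
    by move/eqP: Be; rewrite psumr_eq0 => [/allP /(_ i (mem_index_enum i)) /implyP /(_ isT) /eqP|j _]; [|exact: sqr_ge0].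
  by rewrite big1 ?mulr_ge0 // => i _; rewrite z mulr0.
have sap : 0 < sa by rewrite lt_neqAle eq_sym sqrtr_eq0 -ltNge lt_neqAle eq_sym An A0.
have sbp : 0 < sb by rewrite lt_neqAle eq_sym sqrtr_eq0 -ltNge lt_neqAle eq_sym Bn B0.
have term : forall i, 2%:R * sa * sb * (al i * be i) <= sb ^+ 2 * al i ^+ 2 + sa ^+ 2 * be i ^+ 2.
  move=> i; have := sqr_ge0 (sb * al i - sa * be i); nra.
have : \sum_i 2%:R * sa * sb * (al i * be i) <= \sum_i (sb ^+ 2 * al i ^+ 2 + sa ^+ 2 * be i ^+ 2).
  by apply: ler_sum => i _; exact: term.
rewrite -mulr_sumr big_split /= -!mulr_sumr -/A -/B.
have eA : sa ^+ 2 = A by rewrite /sa sqr_sqrtr.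
have eB : sb ^+ 2 = B by rewrite /sb sqr_sqrtr.
rewrite eA eB => h.
have p : 0 < 2%:R * sa * sb by rewrite !mulr_gt0 ?ltr0n.
rewrite -/sa -/sb -(ler_pM2l p).
have : 2%:R * sa * sb * (sa * sb) = B * A + A * B.
  rewrite -eA -eB; ring.
lra.
Qed.

Lemma sqrtX (a : R) k : 0 <= a -> Num.sqrt (a ^+ k) = Num.sqrt a ^+ k.
Proof.
move=> a0; rewrite -{1}(sqr_sqrtr a0) -exprM mulnC exprM sqrtr_sqr ger0_norm //.
by apply: exprn_ge0; exact: sqrtr_ge0.
Qed.

End RCS.

Section Sys.
Variable R : realType.
Local Notation C := R[i].
Variable d : nat.
Variables X Y : lmodType C.
Variable HX : hilbert X.
Variable HY : hilbert Y.
Variable Cop : X -> Y.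
Variable A : 'I_d -> X -> X.
Hypothesis bC : bounded_op HX HY Cop.
Hypothesis bA : forall j, bounded_op HX HX (A j).
Hypothesis os : output_stable HX HY Cop A.
Hypothesis cA : commutative_tuple A.

Let linC : is_linear Cop := bC.1.
Let linA j : is_linear (A j) := (bA j).1.

Definition rr (l : 'I_d -> C) := \sum_(j < d) cn (l j) ^+ 2.

Lemma rr_ge0 l : 0 <= rr l.
Proof. by apply: sumr_ge0 => j _; exact: sqr_ge0. Qed.

Lemma in_ballE (l : 'I_d -> C) : in_ball l = (rr l < 1).
Proof.
rewrite /in_ball (eq_bigr (fun j => (cn (l j) ^+ 2)%:C)) => [|j _]; last first.
  by rewrite normC_cn rmorphXn.
by rewrite -rmorph_sum -ltcR.
Qed.

Lemma sum_prod_tuple (f : 'I_d -> R) k :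
  \sum_(v : k.-tuple 'I_d) \prod_(i <- v) f i = (\sum_(j < d) f j) ^+ k.
Proof.
elim: k => [|k IH]; first by rewrite tuple0_sum big_nil expr0.
rewrite tuple_sum exprS mulr_suml; apply: eq_bigr => j _.
by rewrite -IH mulr_sumr; apply: eq_bigr => w _; rewrite /= big_cons.
Qed.

Lemma cn_prod (s : seq 'I_d) (l : 'I_d -> C) : cn (\prod_(i <- s) l i) = \prod_(i <- s) cn (l i).
Proof.
have c1 : cn (1 : C) = 1 by have := @cn_nat R 1%N.
by rewrite (big_morph (@cn R) (@cnM R) c1).
Qed.

Lemma bound_pw : exists2 K0 : R, 0 <= K0 &
  forall l x k, hnorm HY (Cop (pw A l k x)) <= K0 * hnorm HX x * Num.sqrt (rr l) ^+ k.
Proof.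
have [M hM] := os.
exists (Num.sqrt `|M|); first exact: sqrtr_ge0.
move=> l x k.
have hk : \sum_(v : k.-tuple 'I_d) hnorm HY (Cop (apply_word A v x)) ^+ 2 <= `|M| * hnorm HX x ^+ 2.
  have := hM x k.+1; rewrite big_ord_recr /= => h.
  have s0 : 0 <= \sum_(i < k) \sum_(v : i.-tuple 'I_d) hnorm HY (Cop (apply_word A v x)) ^+ 2.
    by apply: sumr_ge0 => i _; apply: sumr_ge0 => v _; exact: sqr_ge0.
  have : M * hnorm HX x ^+ 2 <= `|M| * hnorm HX x ^+ 2.
    by apply: ler_wpM2r; [exact: sqr_ge0 | exact: ler_norm].
  lra.
rewrite (pw_words linA) (lin_sum linC).
apply: le_trans; first exact: hn_sum.
apply: (le_trans (y := \sum_(v : k.-tuple 'I_d) cn (\prod_(i <- v) l i) * hnorm HY (Cop (apply_word A v x)))).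
  by apply: ler_sum => v _; rewrite (linZ linC) hnZ.
apply: le_trans; first exact: real_cs.
have e1 : \sum_(v : k.-tuple 'I_d) cn (\prod_(i <- v) l i) ^+ 2 = rr l ^+ k.
  rewrite /rr -sum_prod_tuple; apply: eq_bigr => v _.
  by rewrite cn_prod prodrXl.
rewrite e1 sqrtX ?rr_ge0 // mulrC; apply: ler_wpM2r; first by apply: exprn_ge0; exact: sqrtr_ge0.
apply: (le_trans (y := Num.sqrt (`|M| * hnorm HX x ^+ 2))); first by rewrite ler_sqrt // mulr_ge0 // sqr_ge0.
by rewrite sqrtrM // sqrtr_sqr (ger0_norm (hn_ge0 HX x)).
Qed.

End Sys.

End Part7.
Import Part7.

Module Part8.
Set Implicit Arguments. Unset Strict Implicit. Unset Printing Implicit Defensive.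
Local Open Scope ring_scope.
Local Open Scope complex_scope.

Section TlFacts.
Variable R : realType.
Local Notation C := R[i].
Variable d : nat.
Variable X : lmodType C.
Variable A : 'I_d -> X -> X.
Hypothesis linA : forall j, is_linear (A j).

Lemma Tl_scale (c : C) l y : Tl A (fun j => c * l j) y = c *: Tl A l y.
Proof. by rewrite /Tl scaler_sumr; apply: eq_bigr => j _; rewrite scalerA. Qed.

Lemma pw_scale (c : C) l k x : pw A (fun j => c * l j) k x = c ^+ k *: pw A l k x.
Proof.
elim: k => [|k IH]; first by rewrite expr0 scale1r.
rewrite /pw iterS -/(pw A _ k x) IH Tl_scale (linZ (Tl_linear linA l)).
by rewrite /pw iterS scalerA exprS.
Qed.

Lemma Tl0 y : Tl A (fun _ => 0) y = 0.
Proof. by rewrite /Tl big1 // => j _; rewrite scale0r. Qed.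

Lemma Tl_shift (mu : 'I_d -> C) (j : 'I_d) (s : C) y :
  Tl A (fun i => mu i + (if i == j then s else 0)) y = Tl A mu y + s *: A j y.
Proof.
rewrite /Tl; under eq_bigr do rewrite scalerDl.
rewrite big_split /=; congr (_ + _).
rewrite (bigD1 j) //= eqxx big1 ?addr0 // => i /negbTE ->; exact: scale0r.
Qed.

End TlFacts.

Section SysE.
Variable R : realType.
Local Notation C := R[i].
Variable d : nat.
Variables X Y : lmodType C.
Variable HX : hilbert X.
Variable HY : hilbert Y.
Variable Cop : X -> Y.
Variable A : 'I_d -> X -> X.
Hypothesis bC : bounded_op HX HY Cop.
Hypothesis bA : forall j, bounded_op HX HX (A j).
Hypothesis os : output_stable HX HY Cop A.
Hypothesis cA : commutative_tuple A.

Let linC : is_linear Cop := bC.1.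
Let linA j : is_linear (A j) := (bA j).1.

Lemma in_ball0 : in_ball (fun _ : 'I_d => 0 : C).
Proof. by rewrite in_ballE /rr big1 ?ltr01 // => j _; rewrite cn0 expr0n. Qed.

Lemma E_exists : exists E : ('I_d -> C) -> X -> Y,
  [/\ is_E HY Cop A E, (forall l, bounded_op HX HY (E l)),
      (forall x, E (fun _ => 0) x = Cop x),
      (forall l x, ~~ in_ball l -> E l x = 0) &
      (forall l, in_ball l -> forall x,
         hconverges HY (fun N => \sum_(k < N) Cop (pw A l k x)) (E l x))].
Proof.
have [K0 K00 hK0] := bound_pw bC bA os.
have ser : forall l x, in_ball l -> exists y,
    hconverges HY (fun N => \sum_(k < N) Cop (pw A l k x)) y /\
    hnorm HY y <= K0 * hnorm HX x / (1 - Num.sqrt (rr l)).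
  move=> l x; rewrite in_ballE => hl.
  apply: (@series_cvg _ _ HY (fun k => Cop (pw A l k x)) (K0 * hnorm HX x) (Num.sqrt (rr l))); first exact: sqrtr_ge0.
    by rewrite -sqrtr1 ltr_sqrt.
  exact: hK0.
have h : forall p : ('I_d -> C) * X, exists y, in_ball p.1 ->
    hconverges HY (fun N => \sum_(k < N) Cop (pw A p.1 k p.2)) y.
  move=> [l x] /=; case: (boolP (in_ball l)) => hl.
    by have [y [hy _]] := ser l x hl; exists y.
  by exists 0.
have [f hf] := choice h.
exists (fun l x => if in_ball l then f (l, x) else 0); split.
- move=> l hl x; rewrite hl.
  apply: cvg_ext (hf (l, x) hl) => N; apply: eq_bigr => k _.
  by rewrite (Ehom_pw linA cA linC).
- move=> l; case: (boolP (in_ball l)) => hl; last first.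
    split; first by move=> a x y /=; rewrite scaler0 addr0.
    by exists 0 => x /=; rewrite hn0 mul0r.
  split.
    move=> a x y /=.
    apply: (cvg_uniq (hf (l, a *: x + y) hl)).
    apply: cvg_ext (cvgD (cvgZ a (hf (l, x) hl)) (hf (l, y) hl)) => N /=.
    rewrite scaler_sumr -big_split; apply: eq_bigr => k _ /=.
    by rewrite (pw_linear linA) linC.
  exists (K0 / (1 - Num.sqrt (rr l))) => x /=.
  have [y [hy hb]] := ser l x hl.
  by rewrite (cvg_uniq (hf (l, x) hl) hy) mulrAC.
- move=> x /=; rewrite in_ball0.
  apply: (cvg_uniq (hf (_, x) in_ball0)); apply: (@cvg_evC _ _ _ _ _ 1%N) => N N1.
  case: N N1 => // N _.
  rewrite -(big_mkord xpredT (fun k => Cop (pw A (fun _ => 0) k x))) big_ltn //.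
  rewrite big_nat_cond big1 ?addr0 // => k /andP[/andP[k1 _] _].
  by case: k k1 => // k _; rewrite /pw iterS Tl0 (lin0 linC).
- by move=> l x hl /=; rewrite (negbTE hl).
- by move=> l hl x /=; rewrite hl; exact: (hf (l, x) hl).
Qed.

End SysE.

End Part8.
Import Part8.

Module Part9.
Set Implicit Arguments. Unset Strict Implicit. Unset Printing Implicit Defensive.
Local Open Scope ring_scope.
Local Open Scope complex_scope.

Definition shiftl (R : realType) d (mu : 'I_d -> R[i]) (j : 'I_d) (s : R[i]) :=
  fun i => mu i + (if i == j then s else 0).

Section Coef.
Variable R : realType.
Local Notation C := R[i].
Variable d : nat.
Variable X : lmodType C.
Variable A : 'I_d -> X -> X.
Hypothesis linA : forall j, is_linear (A j).
Hypothesis cA : commutative_tuple A.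
Variable mu : 'I_d -> C.
Variable j : 'I_d.

Fixpoint cf (x : X) (m : nat) : nat -> X :=
  match m with
  | 0 => fun i => if i == 0%N then x else 0
  | m'.+1 => fun i => Tl A mu (cf x m' i) + (if i is i'.+1 then A j (cf x m' i') else 0)
  end.

Lemma cf_zero x m i : (m < i)%N -> cf x m i = 0.
Proof.
elim: m i => [|m IH] [|i] //= hi.
rewrite !IH //; last by apply: ltnW.
by rewrite (lin0 (Tl_linear linA mu)) (lin0 (linA j)) addr0.
Qed.

Lemma cf0 x m : cf x m 0 = pw A mu m x.
Proof. by elim: m => //= m ->; rewrite addr0. Qed.

Lemma A_Tl_comm y : A j (Tl A mu y) = Tl A mu (A j y).
Proof.
rewrite /Tl (lin_sum (linA j)); apply: eq_bigr => i _.
by rewrite (linZ (linA j)) cA.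
Qed.

Lemma A_pw_comm m y : A j (pw A mu m y) = pw A mu m (A j y).
Proof. by elim: m => //= m IH; rewrite /pw /= -!/(pw A mu m _) A_Tl_comm IH. Qed.

Lemma cf1 x m : cf x m 1 = m%:R *: pw A mu m.-1 (A j x).
Proof.
elim: m => [|m IH]; first by rewrite /= scale0r.
rewrite /= IH cf0 A_pw_comm (linZ (Tl_linear linA mu)).
case: m {IH} => [|m]; first by rewrite !scale0r add0r scale1r.
by rewrite /pw /= -!/(pw A mu m _) -[in RHS](addn1 m.+1) natrD scalerDl scale1r.
Qed.

Lemma cf_sum x m N (s : C) : (m < N)%N ->
  pw A (shiftl mu j s) m x = \sum_(i < N) s ^+ i *: cf x m i.
Proof.
elim: m N => [|m IH] N mN.
  case: N mN => // N _; rewrite big_ord_recl /= expr0 scale1r big1 ?addr0 // => i _.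
  by rewrite scaler0.
case: N mN => // N mN.
have mN' : (m < N.+1)%N by apply: ltnW.
rewrite /pw iterS -/(pw A _ m x) Tl_shift //.
under eq_bigr do rewrite /= scalerDr.
rewrite big_split /=; congr (_ + _).
  by rewrite (IH N.+1 mN') (lin_sum (Tl_linear linA mu)); apply: eq_bigr => i _; rewrite (linZ (Tl_linear linA mu)).
rewrite big_ord_recl /= scaler0 add0r (IH N mN) (lin_sum (linA j)) scaler_sumr.
apply: eq_bigr => i _; rewrite /bump /= add1n add0n (linZ (linA j)) scalerA exprS.
by [].
Qed.

End Coef.

Section Pair.
Variable R : realType.
Local Notation C := R[i].
Variable d : nat.
Variables X Xt Y : lmodType C.
Variable HY : hilbert Y.
Variable Cop : X -> Y.
Variable A : 'I_d -> X -> X.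
Variable Ct : Xt -> Y.
Variable At : 'I_d -> Xt -> Xt.
Hypothesis linC : is_linear Cop.
Hypothesis linA : forall j, is_linear (A j).
Hypothesis cA : commutative_tuple A.
Hypothesis linCt : is_linear Ct.
Hypothesis linAt : forall j, is_linear (At j).
Hypothesis cAt : commutative_tuple At.

Definition Prel x xt := forall mu, in_ball mu -> forall k,
  Cop (pw A mu k x) = Ct (pw At mu k xt).

Lemma ball_shift (mu : 'I_d -> C) j : in_ball mu -> exists2 de : R, 0 < de &
  forall s : R, 0 < s -> s < de -> in_ball (shiftl mu j s%:C).
Proof.
rewrite in_ballE => hm.
have r0 := rr_ge0 mu.
exists (Num.min 1 ((1 - rr mu) / 4%:R)).
  by rewrite lt_min ltr01 divr_gt0 ?ltr0n // subr_gt0.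
move=> s s0; rewrite lt_min => /andP[s1 s2].
rewrite in_ballE /rr /shiftl (bigD1 j) //= eqxx.
rewrite (eq_bigr (fun i => cn (mu i) ^+ 2)) => [|i /negbTE ->]; last by rewrite addr0.
move: hm; rewrite /rr (bigD1 j) //= => hm.
set S := \sum_(i < d | i != j) cn (mu i) ^+ 2 in hm *.
have S0 : 0 <= S by apply: sumr_ge0 => i _; exact: sqr_ge0.
have c1 : cn (mu j + s%:C) <= cn (mu j) + s.
  by apply: le_trans (cnD _ _) _; rewrite cnR ger0_norm // ltW.
have c0 := cn_ge0 (mu j + s%:C).
have cm0 := cn_ge0 (mu j).
have cm1 : cn (mu j) <= 1 by nra.
have : cn (mu j + s%:C) ^+ 2 <= (cn (mu j) + s) ^+ 2.
  by rewrite lerXn2r ?nnegrE // addr_ge0 // ltW.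
have rrE : rr mu = cn (mu j) ^+ 2 + S by rewrite /rr (bigD1 j).
move: s2; rewrite ltr_pdivlMr ?ltr0n // rrE => s2.
have f1 : s * cn (mu j) <= s by rewrite ler_piMr // ltW.
have f2 : s * s <= s by rewrite ler_piMr // ltW.
move=> hsq.
have e : (cn (mu j) + s) ^+ 2 = cn (mu j) ^+ 2 + 2%:R * (s * cn (mu j)) + s * s by ring.
rewrite e in hsq.
lra.
Qed.

Lemma Prel_step x xt : Prel x xt -> forall j, Prel (A j x) (At j xt).
Proof.
move=> P j mu hmu k.
have [de de0 hde] := ball_shift j hmu.
pose a i := Cop (cf A mu j x k.+1 i) - Ct (cf At mu j xt k.+1 i).
have a0 : forall i, (k.+1 < i)%N -> a i = 0.
  by move=> i hi; rewrite /a !cf_zero // (lin0 linC) (lin0 linCt) subrr.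
pose K := \sum_(i < k.+2) hnorm HY (a i).
have hK : forall i, hnorm HY (a i) <= K.
  move=> i; case: (ltnP i k.+2) => hi.
    rewrite /K (bigD1 (Ordinal hi)) //= lerDl.
    by apply: sumr_ge0 => i' _; exact: hn_ge0.
  rewrite a0 // hn0; apply: sumr_ge0 => i' _; exact: hn_ge0.
have ha := ident de0 hK.
have : a 1%N = 0.
  apply: ha => t t0 td.
  apply: (@cvg_evC _ _ _ _ _ k.+2) => N hN.
  have sh := P _ (hde t t0 td) k.+1.
  have e1 : \sum_(i < N) (t ^+ i)%:C *: Cop (cf A mu j x k.+1 i) =
            Cop (\sum_(i < N) (t%:C) ^+ i *: cf A mu j x k.+1 i).
    by rewrite (lin_sum linC); apply: eq_bigr => i _; rewrite (linZ linC) rmorphXn.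
  have e2 : \sum_(i < N) (t ^+ i)%:C *: Ct (cf At mu j xt k.+1 i) =
            Ct (\sum_(i < N) (t%:C) ^+ i *: cf At mu j xt k.+1 i).
    by rewrite (lin_sum linCt); apply: eq_bigr => i _; rewrite (linZ linCt) rmorphXn.
  rewrite /a; under eq_bigr do rewrite scalerBr.
  rewrite sumrB e1 e2 -(cf_sum linA mu j x (t%:C) hN) -(cf_sum linAt mu j xt (t%:C) hN).
  by rewrite sh subrr.
rewrite /a !cf1 // (linZ linC) (linZ linCt) /= => /eqP; rewrite -scalerBr scaler_eq0.
rewrite pnatr_eq0 /= subr_eq0 => /eqP.
by [].
Qed.

Lemma aw_linear (B : 'I_d -> Xt -> Xt) (linB : forall j, is_linear (B j)) v :
  is_linear (apply_word B v).
Proof.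
elim: v => [|j v IH] a x y //=.
by rewrite IH (linB j).
Qed.

Lemma Prel_words x xt : Prel x xt -> forall v, Cop (apply_word A v x) = Ct (apply_word At v xt).
Proof.
move=> P v.
suff : Prel (apply_word A v x) (apply_word At v xt).
  by move=> /(_ (fun _ => 0) (@in_ball0 R d) 0%N).
elim: v => [|j v IH] //=.
exact: Prel_step.
Qed.

End Pair.

End Part9.
Import Part9.

Module Part10.
Set Implicit Arguments. Unset Strict Implicit. Unset Printing Implicit Defensive.
Local Open Scope ring_scope.
Local Open Scope complex_scope.

Section PairE.
Variable R : realType.
Local Notation C := R[i].
Variable d : nat.
Variables X Xt Y : lmodType C.
Variable HX : hilbert X.
Variable HXt : hilbert Xt.
Variable HY : hilbert Y.
Variable Cop : X -> Y.
Variable A : 'I_d -> X -> X.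
Variable Ct : Xt -> Y.
Variable At : 'I_d -> Xt -> Xt.
Hypothesis bC : bounded_op HX HY Cop.
Hypothesis bA : forall j, bounded_op HX HX (A j).
Hypothesis os : output_stable HX HY Cop A.
Hypothesis bCt : bounded_op HXt HY Ct.
Hypothesis bAt : forall j, bounded_op HXt HXt (At j).
Hypothesis ost : output_stable HXt HY Ct At.

Lemma rr_scale (t : R) (l : 'I_d -> C) : 0 <= t -> rr (fun j => t%:C * l j) = t ^+ 2 * rr l.
Proof.
move=> t0; rewrite /rr mulr_sumr; apply: eq_bigr => j _.
by rewrite cnM cnR ger0_norm // exprMn.
Qed.

Lemma Prel_of_E (E : ('I_d -> C) -> X -> Y) (Et : ('I_d -> C) -> Xt -> Y) x xt :
  (forall l, in_ball l -> forall x, hconverges HY (fun N => \sum_(k < N) Cop (pw A l k x)) (E l x)) ->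
  (forall l, in_ball l -> forall x, hconverges HY (fun N => \sum_(k < N) Ct (pw At l k x)) (Et l x)) ->
  (forall l, in_ball l -> E l x = Et l xt) -> Prel Cop A Ct At x xt.
Proof.
move=> hE hEt heq mu hmu k.
have [K0 K00 hK0] := bound_pw bC bA os.
have [Kt Kt0 hKt] := bound_pw bCt bAt ost.
have linC := bC.1; have linCt := bCt.1.
have linA j := (bA j).1; have linAt j := (bAt j).1.
pose a i := Cop (pw A mu i x) - Ct (pw At mu i xt).
have rr1 : Num.sqrt (rr mu) <= 1 by rewrite -sqrtr1 ler_sqrt // ltW // -in_ballE.
have hb : forall i, hnorm HY (a i) <= K0 * hnorm HX x + Kt * hnorm HXt xt.
  move=> i; apply: le_trans (hnD _ _ _) _; rewrite hnN.
  have p1 : Num.sqrt (rr mu) ^+ i <= 1 by apply: exprn_ile1 => //; exact: sqrtr_ge0.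
  have q1 := hK0 mu x i; have q2 := hKt mu xt i.
  have r1 : 0 <= K0 * hnorm HX x by rewrite mulr_ge0 // hn_ge0.
  have r2 : 0 <= Kt * hnorm HXt xt by rewrite mulr_ge0 // hn_ge0.
  have s0 : 0 <= Num.sqrt (rr mu) ^+ i by apply: exprn_ge0; exact: sqrtr_ge0.
  have : K0 * hnorm HX x * Num.sqrt (rr mu) ^+ i <= K0 * hnorm HX x by rewrite ler_piMr.
  have : Kt * hnorm HXt xt * Num.sqrt (rr mu) ^+ i <= Kt * hnorm HXt xt by rewrite ler_piMr.
  lra.
suff ha : a k = 0 by move/eqP: ha; rewrite subr_eq0 => /eqP.
apply: (@ident _ _ HY a _ 1 ltr01 hb) => t t0 t1.
have tb : in_ball (fun j => t%:C * mu j).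
  rewrite in_ballE rr_scale ?ltW //.
  have : rr mu < 1 by rewrite -in_ballE.
  have := rr_ge0 mu; have : t ^+ 2 <= 1 by rewrite exprn_ile1 // ltW.
  nra.
have c := cvgB (hE _ tb x) (hEt _ tb xt).
rewrite heq // subrr in c.
apply: cvg_ext c => N.
rewrite -sumrB; apply: eq_bigr => i _.
rewrite !(pw_scale _ (t%:C)) // (linZ linC) (linZ linCt) -scalerBr rmorphXn.
by [].
Qed.

End PairE.

Section Adj.
Variable R : realType.
Local Notation C := R[i].
Variables X Y : lmodType C.
Variable HX : hilbert X.
Variable HY : hilbert Y.

Lemma adj_exists (T : X -> Y) : bounded_op HX HY T -> exists S : Y -> X, is_adjoint HX HY T S.
Proof.
move=> bT; have [M M0 hM] := bounded_pos bT.
have h : forall y, exists z, forall x, inner HY (T x) y = inner HX x z.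
  move=> y; apply: (@riesz _ _ HX (fun x => inner HY (T x) y)).
    by move=> a x x'; rewrite bT.1 ipDl ipZl.
  exists (M * hnorm HY y) => x.
  apply: le_trans (cs _ _ _) _.
  rewrite mulrAC; apply: ler_wpM2r; first exact: hn_ge0.
  exact: hM.
have [S hS] := choice h.
by exists S => x y; exact: hS.
Qed.

End Adj.

End Part10.
Import Part10.

Theorem theorem3p17 (R : realType) (d : nat)
  (X Xt Y : lmodType R[i]) (HX : hilbert X) (HXt : hilbert Xt) (HY : hilbert Y)
  (Cop : X -> Y) (A : 'I_d -> X -> X) (Ct : Xt -> Y) (At : 'I_d -> Xt -> Xt) :
  bounded_op HX HY Cop -> (forall j, bounded_op HX HX (A j)) ->
  bounded_op HXt HY Ct -> (forall j, bounded_op HXt HXt (At j)) ->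
  output_stable HX HY Cop A -> observable Cop A -> commutative_tuple A ->
  output_stable HXt HY Ct At -> observable Ct At -> commutative_tuple At ->
  (* K^a_{C,A}(lambda,zeta) = K^a_{Ct,At}(lambda,zeta) on B^d x B^d *)
  (forall (E : ('I_d -> R[i]) -> X -> Y) (Et : ('I_d -> R[i]) -> Xt -> Y),
     is_E HY Cop A E -> is_E HY Ct At Et ->
     forall lam zeta : 'I_d -> R[i], in_ball lam -> in_ball zeta ->
     forall (S : Y -> X) (St : Y -> Xt),
       is_adjoint HX HY (E zeta) S -> is_adjoint HXt HY (Et zeta) St ->
       forall y : Y, E lam (S y) = Et lam (St y)) ->
  exists (U : X -> Xt) (Ui : Xt -> X),
    [/\ is_linear U, cancel U Ui, cancel Ui U,
        (forall x x', inner HXt (U x) (U x') = inner HX x x') &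
        ((forall x, Cop x = Ct (U x)) /\
         (forall j x, A j x = Ui (At j (U x))))].
Proof.
move=> bC bA bCt bAt osA obsA cA osAt obsAt cAt hK.
have linC := bC.1; have linCt := bCt.1.
have linA j := (bA j).1; have linAt j := (bAt j).1.
have [E [isE bE E0 Eout Econv]] := E_exists bC bA osA cA.
have [Et [isEt bEt Et0 Etout Etconv]] := E_exists bCt bAt osAt cAt.
have [S hS] : exists S : ('I_d -> R[i]) -> Y -> X, forall z, is_adjoint HX HY (E z) (S z).
  by have [S hS] := choice (fun z => adj_exists (bE z)); exists S.
have [St hSt] : exists St : ('I_d -> R[i]) -> Y -> Xt, forall z, is_adjoint HXt HY (Et z) (St z).
  by have [S' hS'] := choice (fun z => adj_exists (bEt z)); exists S'.
have hyp : forall lam zeta y, E lam (S zeta y) = Et lam (St zeta y).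
  move=> lam zeta y.
  case: (boolP (in_ball lam)) => hl; last by rewrite Eout // Etout.
  case: (boolP (in_ball zeta)) => hz; first exact: (hK E Et isE isEt lam zeta hl hz (S zeta) (St zeta) (hS zeta) (hSt zeta) y).
  have S0 : S zeta y = 0.
    apply: (@inner_eq0 _ _ HX); rewrite -hS Eout // ip0l //.
  have St0 : St zeta y = 0.
    apply: (@inner_eq0 _ _ HXt); rewrite -hSt Etout // ip0l //.
  by rewrite S0 St0 (lin0 (bE lam).1) (lin0 (bEt lam).1).
pose I := (('I_d -> R[i]) * Y)%type.
pose g (p : I) := S p.1 p.2.
pose gt (p : I) := St p.1 p.2.
have gip : forall p q, inner HX (g p) (g q) = inner HXt (gt p) (gt q).
  by move=> p q; rewrite /g /gt -hS -hSt hyp.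
have gip' : forall p q, inner HXt (gt p) (gt q) = inner HX (g p) (g q).
  by move=> p q; rewrite gip.
have aw0 : forall v, apply_word At v 0 = 0.
  by move=> v; apply: lin0; apply: aw_linear.
have aw0' : forall v, apply_word A v 0 = 0.
  by move=> v; apply: lin0; apply: aw_linear.
have gdense : forall x, (forall p, inner HX x (g p) = 0) -> x = 0.
  move=> x hx; apply: obsA => v.
  have Ez : forall l, E l x = 0.
    move=> l; apply: (@inner_eq0 _ _ HY).
    by rewrite hS; exact: (hx (l, E l x)).
  have P : Prel Cop A Ct At x 0.
    apply: (Prel_of_E bC bA osA bCt bAt osAt Econv Etconv) => l _.
    by rewrite Ez (lin0 (bEt l).1).
  by rewrite (Prel_words HY linC linA cA linCt linAt cAt P) aw0 (lin0 linCt).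
have gdense' : forall x, (forall p, inner HXt x (gt p) = 0) -> x = 0.
  move=> x hx; apply: obsAt => v.
  have Ez : forall l, Et l x = 0.
    move=> l; apply: (@inner_eq0 _ _ HY).
    by rewrite hSt; exact: (hx (l, Et l x)).
  have P : Prel Ct At Cop A x 0.
    apply: (Prel_of_E bCt bAt osAt bC bA osA Etconv Econv) => l _.
    by rewrite Ez (lin0 (bE l).1).
  by rewrite (Prel_words HY linCt linAt cAt linC linA cA P) aw0' (lin0 linC).
have [U hU] := ext_exists gip gdense.
have [Ut hUt] := ext_exists gip' gdense'.
have Ulin := U_linear gdense hU.
have Uiso := U_iso gip gdense hU.
have UK : cancel U Ut.
  move=> x; have [K hK'] := approx gdense x.
  exact: cvg_uniq (hUt _ _ (hU _ _ hK')) hK'.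
have UtK : cancel Ut U.
  move=> x; have [K hK'] := approx gdense' x.
  exact: cvg_uniq (hU _ _ (hUt _ _ hK')) hK'.
have vs : forall lam L, E lam (vsum g L) = Et lam (vsum gt L).
  move=> lam L; rewrite /vsum (lin_sum (bE lam).1) (lin_sum (bEt lam).1).
  by apply: eq_bigr => c _; rewrite (linZ (bE lam).1) (linZ (bEt lam).1) /g /gt hyp.
have inter : forall lam x, E lam x = Et lam (U x).
  move=> lam x; have [K hK'] := approx gdense x.
  have c1 := cvg_op (bE lam) hK'.
  have c2 := cvg_op (bEt lam) (hU _ _ hK').
  apply: (cvg_uniq c1); apply: cvg_ext c2 => n; by rewrite vs.
have hP : forall y, Prel Cop A Ct At y (U y).
  move=> y; apply: (Prel_of_E bC bA osA bCt bAt osAt Econv Etconv) => l _.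
  exact: inter.
exists U, Ut; split => //; split.
  by move=> x; rewrite -E0 -Et0 inter.
move=> j x.
have st := Prel_step HY linC linA cA linCt linAt cAt (hP x) j.
suff e : U (A j x) = At j (U x) by rewrite -e UK.
set w := U (A j x) - At j (U x).
have Pw : Prel Ct At Ct At w 0.
  move=> mu hmu k.
  rewrite /w (linB (pw_linear linAt mu k)) (linB linCt) -(hP (A j x) mu hmu k) -(st mu hmu k).
  by rewrite subrr (lin0 (pw_linear linAt mu k)) (lin0 linCt).
apply/eqP; rewrite -subr_eq0 -/w; apply/eqP; apply: obsAt => v.
by rewrite (Prel_words HY linCt linAt cAt linCt linAt cAt Pw) aw0 (lin0 linCt).
Qed.
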